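(* Let $\mathcal R$ be a strong CCTRS. If $s\in\mathcal T_{\mathrm p}(\mathcal H)$ is non-terminating with respect to $\to_{\Xi(\mathcal R),\mu}$, then $\zeta^-(s)\rightharpoonup^\infty$.
   Context: A CCTRS over $\mathcal F$ is a set $\mathcal R$ of conditional rules each of the form $f(\ell_1,\dots,\ell_n)\to r\Leftarrow a_1\approx b_1,\dots,a_k\approx b_k$ (defined symbols are roots of left-hand sides, others constructors; constructor terms contain only constructors and variables) where $\ell_1,\dots,\ell_n,b_1,\dots,b_k$ are constructor terms, the terms $f(\ell_1,\dots,\ell_n),b_1,\dots,b_k$ pairwise share no variables, $\mathrm{Var}(r)\subseteq\mathrm{Var}(\ell_1,\dots,\ell_n,b_1,\dots,b_k)$, and $\mathrm{Var}(a_i)\subseteq\mathrm{Var}(\ell_1,\dots,\ell_n,b_1,\dots,b_{i-1})$. $\mathcal R{\restriction}f$ is the set of rules with left-hand root $f$. A strong CCTRS is a CCTRS with each $\mathcal R{\restriction}f$ finite and each $f(\ell_1,\dots,\ell_n)$ and $b_j$ linear. Let $m_f=|\mathcal R{\restriction}f|$ (0 for constructors), with fixed enumeration $\rho^f_1,\dots,\rho^f_{m_f}$. Labeled reduction: $\mathcal G$ consists of the constructors and symbols $f_R$ ($R\subseteq\mathcal R{\restriction}f$, same arity as $f$); $\mathrm{label}$ replaces each defined $f$ by $f_{\mathcal R\restriction f}$; $\mathrm{erase}$ removes labels; labeled normal forms are terms over constructors, symbols $f_\emptyset$ and variables. $s\rightharpoonup t$ is defined inductively: either (i) there are $p$ and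 a rule $\rho\colon\ell\to r\Leftarrow c$ with $s|_p=f_R(s_1,\dots,s_n)$, $\rho\in R$, $t=s[f_{R\setminus\{\rho\}}(s_1,\dots,s_n)]_p$, and linear labeled normal forms $u_1,\dots,u_n$ on fresh variables and $\sigma$ with $s|_p=f_R(u_1,\dots,u_n)\sigma$ and $f(\mathrm{erase}(u_1),\dots,\mathrm{erase}(u_n))$ not unifiable with $\ell$; or (ii) there are $p$, $\rho\colon f(\ell_1,\dots,\ell_n)\to r\Leftarrow a_1\approx b_1,\dots,a_k\approx b_k$, $\sigma$, $0\le j\le k$ with $s|_p=f_R(\ell_1\sigma,\dots,\ell_n\sigma)$, $\rho\in R$, $\mathrm{label}(a_i)\sigma\rightharpoonup^*b_i\sigma$ for $1\le i\le j$, and either $j=k$, $t=s[\mathrm{label}(r)\sigma]_p$, or $j<k$, $\mathrm{label}(a_{j+1})\sigma\rightharpoonup^*u\tau$ for a linear labeled normal form $u$ with $\mathrm{erase}(u)$ not unifiable with $b_{j+1}$, and $t=s[f_{R\setminus\{\rho\}}(\ell_1\sigma,\dots,\ell_n\sigma)]_p$. $s\rightharpoonup_\rhd t$ if there are $p$, $\rho$ as in (ii), $\sigma$, $0\le j<k$ with $s|_p=f_R(\ell_1\sigma,\dots,\ell_n\sigma)$, $\rho\in R$, $\mathrm{label}(a_i)\sigma\rightharpoonup^*b_i\sigma$ for $i\le j$, and $t=\mathrm{label}(a_{j+1})\sigma$; $s\rightharpoonup^\infty$ means an infinite sequence of $\rightharpoonup\cup\rightharpoonup_\rhd$ steps from $s$.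 The transformed system: signature $\mathcal H$ with constants $\bot,\top$ ($\mu=\emptyset$); every $f\in\mathcal F$ of arity $n$ as a symbol of arity $n+m_f$ with $\mu(f)=\{1,\dots,n\}$; and for every defined $f$ of arity $n$, every $\rho^f_i$ with $k>0$ conditions and $1\le j\le k$ a symbol $f_i^j$ of arity $n+m_f+j-1$ with $\mu(f_i^j)=\{n+i+j-1\}$. A position is active in $t$ if it is $\epsilon$ or $iq$ with $i\in\mu(\mathrm{root}(t))$ and $q$ active in $t|_i$; $\to_{\Xi(\mathcal R),\mu}$ rewrites only at active positions. $\xi_\star$ ($\star\in\{\bot,\top\}$): identity on variables, homomorphic on constructors, $f(t_1..t_n)\mapsto f(\xi_\star(t_1),\dots,\xi_\star(t_n),\star,\dots,\star)$ ($m_f$ copies) for defined $f$. For a linear constructor term $t$: $\mathrm{AP}(x)=\emptyset$, and $\mathrm{AP}(f(t_1,\dots,t_n))$ consists of $g(x_1,\dots,x_m)$ for every constructor $g\neq f$ of arity $m$, $g(x_1,\dots,x_m,\bot,\dots,\bot)$ for every defined $g$ of arity $m$, and $f(x_1,\dots,x_{i-1},u,x_{i+1},\dots,x_n)$ for $u\in\mathrm{AP}(t_i)$ (fresh distinct $x$'s). Notation: $\langle t_1,\dots,t_n\rangle[u_1,\dots,u_j]_i$ is $t_1,\dots,t_{i-1},u_1,\dots,u_j,t_{i+1},\dots,t_n$. For the $i$-th rule $\rho_i\colon f(\vec\ell)\to r\Leftarrow a_1\approx b_1,\dots,a_k\approx b_k$ of $\mathcal R{\restriction}f$ and fresh distinct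 $x_1,\dots,x_{m_f},y_1,\dots,y_n$, $\Xi(\mathcal R)$ contains: $(1)$ if $k=0$: $f(\vec\ell,\langle\vec x\rangle[\top]_i)\to\xi_\top(r)$; if $k>0$: $(2)$ $f(\vec\ell,\langle\vec x\rangle[\top]_i)\to f_i^1(\vec\ell,\langle\vec x\rangle[\xi_\top(a_1)]_i)$, $(3)$ $f_i^k(\vec\ell,\langle\vec x\rangle[b_1,\dots,b_k]_i)\to\xi_\top(r)$, $(4)$ for $1\le j<k$: $f_i^j(\vec\ell,\langle\vec x\rangle[b_1,\dots,b_j]_i)\to f_i^{j+1}(\vec\ell,\langle\vec x\rangle[b_1,\dots,b_j,\xi_\top(a_{j+1})]_i)$, $(5)$ for $1\le j\le k$ and $v\in\mathrm{AP}(b_j)$ (fresh variables): $f_i^j(\vec\ell,\langle\vec x\rangle[b_1,\dots,b_{j-1},v]_i)\to f(\vec\ell,\langle\vec x\rangle[\bot]_i)$; and for any $k$: $(6)$ for $1\le j\le n$ and $v\in\mathrm{AP}(\ell_j)$ (fresh variables): $f(\langle\vec y\rangle[v]_j,\langle\vec x\rangle[\top]_i)\to f(\langle\vec y\rangle[v]_j,\langle\vec x\rangle[\bot]_i)$. Proper terms: a term of $\mathcal T(\mathcal H,\mathcal V)$ is proper if it is a variable, or $f(s_1,\dots,s_n)$ with $f$ a constructor and proper $s_i$, or $f(s_1,\dots,s_n,c_1,\dots,c_{m_f})$ with $f$ defined, proper $s_i$ and $c_i\in\{\bot,\top\}$; $\mathcal T_{\mathrm p}(\mathcal H)$ denotes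 the ground proper terms. For proper $s$, $\zeta^-(s)\in\mathcal T(\mathcal G,\mathcal V)$ is defined by $\zeta^-(x)=x$, $\zeta^-(f(s_1,\dots,s_n))=f(\zeta^-(s_1),\dots,\zeta^-(s_n))$ for constructors, and $\zeta^-(f(s_1,\dots,s_n,c_1,\dots,c_{m_f}))=f_R(\zeta^-(s_1),\dots,\zeta^-(s_n))$ with $R=\{\rho^f_i\mid c_i=\top\}$. *)

(* Defs.v *)
From Stdlib Require Import List Arith.
Import ListNotations.

Inductive term (S : Type) : Type :=
| Var : nat -> term S
| Fun : S -> list (term S) -> term S.
Arguments Var {S} _.
Arguments Fun {S} _ _.

Fixpoint subst {S : Type} (sg : nat -> term S) (t : term S) : term S :=
  match t with
  | Var x => sg x
  | Fun f ts => Fun f (map (subst sg) ts)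
  end.

Fixpoint vars {S : Type} (t : term S) : list nat :=
  match t with
  | Var x => [x]
  | Fun _ ts => flat_map vars ts
  end.

Fixpoint funs {S : Type} (t : term S) : list S :=
  match t with
  | Var _ => []
  | Fun f ts => f :: flat_map funs ts
  end.

Fixpoint fmap {A B : Type} (h : A -> B) (t : term A) : term B :=
  match t with
  | Var x => Var x
  | Fun f ts => Fun (h f) (map (fmap h) ts)
  end.

Definition linear {S : Type} (t : term S) : Prop := NoDup (vars t).
Definition linear_list {S : Type} (ts : list (term S)) : Prop :=
  NoDup (flat_map vars ts).

Definition disjoint (xs ys : list nat) : Prop :=
  forall x, In x xs -> ~ In x ys.

Definition unifiable {S : Type} (s t : term S) : Prop :=
  exists th : nat -> term S, subst th s = subst th t.

Inductive subterm_eq {S : Type} : term S -> term S -> Prop :=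
| st_refl t : subterm_eq t t
| st_arg s u g ts : In u ts -> subterm_eq s u -> subterm_eq s (Fun g ts).

(* replace the i-th (1-based) element of xs by the list us:
   <xs>[us]_i = x_1,..,x_{i-1},us,x_{i+1},..,x_n *)
Definition ins {A : Type} (xs : list A) (i : nat) (us : list A) : list A :=
  firstn (i - 1) xs ++ us ++ skipn i xs.

Fixpoint clear_at (l : list bool) (i : nat) : list bool :=
  match l, i with
  | [], _ => []
  | _ :: l', 0 => false :: l'
  | b :: l', S i' => b :: clear_at l' i'
  end.

(* A rule  f(l_1,..,l_n) -> r <= a_1 ~ b_1, ..., a_k ~ b_k  of R|f is stored
   in the list Rf f (the fixed enumeration rho^f_1..rho^f_{m_f});
   rconds = [(a_1,b_1); ...; (a_k,b_k)]. *)
Record crule (F : Type) := mkRule {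
  rargs : list (term F);
  rrhs : term F;
  rconds : list (term F * term F) }.
Arguments rargs {F} _.
Arguments rrhs {F} _.
Arguments rconds {F} _.

Inductive Hsym (F : Type) : Type :=
| HBot : Hsym F
| HTop : Hsym F
| HF : F -> Hsym F                    (* f, arity n + m_f *)
| HAux : F -> nat -> nat -> Hsym F.   (* f_i^j (i, j 1-based), arity n + m_f + j - 1 *)
Arguments HBot {F}.
Arguments HTop {F}.
Arguments HF {F} _.
Arguments HAux {F} _ _ _.

Section System.
Variable F : Type.
Variable arity : F -> nat.
Variable Rf : F -> list (crule F).

Definition fterm := term F.
(* labeled symbols f_R: (f, R) with R a bit vector of length m_f,
   bit i (0-based) set iff rho^f_{i+1} is in R; constructors carry [] *)
Definition gterm := term (F * list bool).
Definition hterm := term (Hsym F).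

Definition m (f : F) : nat := length (Rf f).
Definition is_constructor (f : F) : Prop := Rf f = [].

Inductive wf : fterm -> Prop :=
| wf_var x : wf (Var x)
| wf_fun f ts : length ts = arity f -> Forall wf ts -> wf (Fun f ts).

Definition cterm (t : fterm) : Prop := Forall is_constructor (funs t).

Definition rlhs (f : F) (rho : crule F) : fterm := Fun f (rargs rho).

Definition pairwise_disjoint (ls : list (list nat)) : Prop :=
  forall i j, i < length ls -> j < length ls -> i <> j ->
    disjoint (nth i ls []) (nth j ls []).

Definition is_CCTRS : Prop :=
  forall f rho, In rho (Rf f) ->
    length (rargs rho) = arity f /\
    Forall wf (rargs rho) /\ wf (rrhs rho) /\
    Forall (fun c => wf (fst c) /\ wf (snd c)) (rconds rho) /\
    Forall cterm (rargs rho) /\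
    Forall (fun c => cterm (snd c)) (rconds rho) /\
    pairwise_disjoint (vars (rlhs f rho) :: map (fun c => vars (snd c)) (rconds rho)) /\
    incl (vars (rrhs rho))
         (vars (rlhs f rho) ++ flat_map (fun c => vars (snd c)) (rconds rho)) /\
    (forall i, i < length (rconds rho) ->
       incl (vars (fst (nth i (rconds rho) (Var 0, Var 0))))
            (vars (rlhs f rho) ++
             flat_map (fun c => vars (snd c)) (firstn i (rconds rho)))).

(* strong CCTRS: each R|f finite (a list, without repetitions since R is a
   set), f(l_1..l_n) and every b_j linear *)
Definition strong_CCTRS : Prop :=
  is_CCTRS /\
  forall f, NoDup (Rf f) /\
    forall rho, In rho (Rf f) ->
      linear (rlhs f rho) /\ Forall (fun c => linear (snd c)) (rconds rho).

Definition label : fterm -> gterm := fmap (fun f => (f, repeat true (m f))).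
Definition erase : gterm -> fterm := fmap fst.

(* labeled normal form: only constructors, symbols f_emptyset, variables *)
Definition lnf (t : gterm) : Prop :=
  Forall (fun g => snd g = repeat false (m (fst g))) (funs t).

Definition cnd_a (rho : crule F) (j : nat) : fterm := fst (nth j (rconds rho) (Var 0, Var 0)).
Definition cnd_b (rho : crule F) (j : nat) : fterm := snd (nth j (rconds rho) (Var 0, Var 0)).
(* NB: in the Rocq encoding the rule rho^f_{i+1} has 0-based index i, and the
   condition a_{j+1} ~ b_{j+1} has 0-based index j. *)

Inductive lstep : gterm -> gterm -> Prop :=
| ls_ctx g pre s t post :
    lstep s t -> lstep (Fun g (pre ++ s :: post)) (Fun g (pre ++ t :: post))
| ls_nomatch f lab i rho ss us sg :
    nth_error (Rf f) i = Some rho ->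
    nth i lab false = true ->
    Forall lnf us ->
    linear_list us ->
    disjoint (flat_map vars us) (vars (rlhs f rho)) ->
    map (subst sg) us = ss ->
    ~ unifiable (Fun f (map erase us)) (rlhs f rho) ->
    lstep (Fun (f, lab) ss) (Fun (f, clear_at lab i) ss)
| ls_apply f lab i rho sg :
    nth_error (Rf f) i = Some rho ->
    nth i lab false = true ->
    (forall j, j < length (rconds rho) ->
       lsteps (subst sg (label (cnd_a rho j))) (subst sg (label (cnd_b rho j)))) ->
    lstep (Fun (f, lab) (map (fun l => subst sg (label l)) (rargs rho)))
          (subst sg (label (rrhs rho)))
(* case (ii), j < k: condition j+1 fails *)
| ls_condfail f lab i rho sg j u tau :
    nth_error (Rf f) i = Some rho ->
    nth i lab false = true ->
    j < length (rconds rho) ->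
    (forall j', j' < j ->
       lsteps (subst sg (label (cnd_a rho j'))) (subst sg (label (cnd_b rho j')))) ->
    lnf u -> linear u ->
    disjoint (vars u) (vars (cnd_b rho j)) ->
    lsteps (subst sg (label (cnd_a rho j))) (subst tau u) ->
    ~ unifiable (erase u) (cnd_b rho j) ->
    lstep (Fun (f, lab) (map (fun l => subst sg (label l)) (rargs rho)))
          (Fun (f, clear_at lab i) (map (fun l => subst sg (label l)) (rargs rho)))
with lsteps : gterm -> gterm -> Prop :=
| lsteps_refl s : lsteps s s
| lsteps_step s t u : lstep s t -> lsteps t u -> lsteps s u.

Definition lcstep (s t : gterm) : Prop :=
  exists f lab i rho sg j,
    nth_error (Rf f) i = Some rho /\
    nth i lab false = true /\
    j < length (rconds rho) /\
    (forall j', j' < j ->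
       lsteps (subst sg (label (cnd_a rho j'))) (subst sg (label (cnd_b rho j')))) /\
    subterm_eq (Fun (f, lab) (map (fun l => subst sg (label l)) (rargs rho))) s /\
    t = subst sg (label (cnd_a rho j)).

Definition linf (s : gterm) : Prop :=
  exists seq : nat -> gterm, seq 0 = s /\
    forall k, lstep (seq k) (seq (S k)) \/ lcstep (seq k) (seq (S k)).

Definition bot : hterm := Fun HBot [].
Definition top : hterm := Fun HTop [].

Fixpoint xi (c : Hsym F) (t : fterm) : hterm :=
  match t with
  | Var x => Var x
  | Fun f ts => Fun (HF f) (map (xi c) ts ++ repeat (Fun c []) (m f))
  end.

(* constructor terms of F seen as terms of H (identity embedding) *)
Definition emb : fterm -> hterm := fmap HF.

(* AP(t) (the variables are chosen freely here; freshness/distinctness is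
   imposed through linearity of the left-hand sides of Xi(R), see below) *)
Inductive AP : fterm -> hterm -> Prop :=
| AP_sym f ts g xs :
    ((is_constructor g /\ g <> f) \/ ~ is_constructor g) ->
    length xs = arity g ->
    AP (Fun f ts) (Fun (HF g) (map Var xs ++ repeat bot (m g)))
| AP_arg f ts i u xs :
    1 <= i <= length ts ->
    length xs = length ts ->
    AP (nth (i - 1) ts (Var 0)) u ->
    AP (Fun f ts) (Fun (HF f) (ins (map Var xs) i [u])).

Definition Xi_rule (l r : hterm) : Prop :=
  linear l /\
  exists f i rho xv,
    1 <= i <= m f /\ nth_error (Rf f) (i - 1) = Some rho /\ length xv = m f /\
    let X := map Var xv in
    let L := map emb (rargs rho) in
    let k := length (rconds rho) in
    let a j := fst (nth (j - 1) (rconds rho) (Var 0, Var 0)) in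
    let b j := snd (nth (j - 1) (rconds rho) (Var 0, Var 0)) in
    let B j := map (fun c => emb (snd c)) (firstn j (rconds rho)) in
    (* (1) *)
    (k = 0 /\ l = Fun (HF f) (L ++ ins X i [top]) /\ r = xi HTop (rrhs rho)) \/
    (* (2) *)
    (k > 0 /\ l = Fun (HF f) (L ++ ins X i [top]) /\
       r = Fun (HAux f i 1) (L ++ ins X i [xi HTop (a 1)])) \/
    (* (3) *)
    (k > 0 /\ l = Fun (HAux f i k) (L ++ ins X i (B k)) /\ r = xi HTop (rrhs rho)) \/
    (* (4) *)
    (exists j, 1 <= j < k /\
       l = Fun (HAux f i j) (L ++ ins X i (B j)) /\
       r = Fun (HAux f i (S j)) (L ++ ins X i (B j ++ [xi HTop (a (S j))]))) \/
    (* (5) *)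
    (exists j v, 1 <= j <= k /\ AP (b j) v /\
       l = Fun (HAux f i j) (L ++ ins X i (B (j - 1) ++ [v])) /\
       r = Fun (HF f) (L ++ ins X i [bot])) \/
    (* (6) *)
    (exists yv j v, length yv = arity f /\ 1 <= j <= arity f /\
       AP (nth (j - 1) (rargs rho) (Var 0)) v /\
       l = Fun (HF f) (ins (map Var yv) j [v] ++ ins X i [top]) /\
       r = Fun (HF f) (ins (map Var yv) j [v] ++ ins X i [bot])).

(* replacement map mu, on 0-based argument indices *)
Definition active (g : Hsym F) (k : nat) : Prop :=
  match g with
  | HF f => k < arity f                        (* mu(f) = {1..n} *)
  | HAux f i j => k = arity f + i + j - 2      (* mu(f_i^j) = {n+i+j-1} *)
  | _ => False
  end.

Inductive cstep : hterm -> hterm -> Prop :=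
| cs_root l r sg : Xi_rule l r -> cstep (subst sg l) (subst sg r)
| cs_ctx g pre s t post :
    active g (length pre) -> cstep s t ->
    cstep (Fun g (pre ++ s :: post)) (Fun g (pre ++ t :: post)).

Definition nonterminating (s : hterm) : Prop :=
  exists seq : nat -> hterm, seq 0 = s /\ forall k, cstep (seq k) (seq (S k)).

Definition is_bt (c : hterm) : Prop := c = bot \/ c = top.

Inductive proper : hterm -> Prop :=
| pr_var x : proper (Var x)
| pr_fun f ss cs :
    length ss = arity f -> Forall proper ss ->
    length cs = m f -> Forall is_bt cs ->
    proper (Fun (HF f) (ss ++ cs)).

Definition is_top (c : hterm) : bool :=
  match c with Fun HTop [] => true | _ => false end.

Fixpoint zeta (t : hterm) : gterm :=
  match t with
  | Var x => Var x
  | Fun (HF f) ts =>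
      Fun (f, map is_top (skipn (arity f) ts)) (firstn (arity f) (map zeta ts))
  | Fun _ _ => Var 0  (* not reached on proper terms *)
  end.

Definition ground {S : Type} (t : term S) : Prop := vars t = [].

End System.

(* Main.v *)
Require Import Defs.
From Stdlib Require Import List Arith Lia.
Import ListNotations.
Lemma app_split_len {A} (a b c d : list A) :
  length a = length c -> a ++ b = c ++ d -> a = c /\ b = d.
Proof.
  revert c; induction a as [|x a IH]; intros [|y c] Hl He; simpl in *; try lia.
  - auto.
  - injection He as -> He. destruct (IH c ltac:(lia) He) as [-> ->]. auto.
Qed.

Lemma app_cons_split {A} (a c b d : list A) x y :
  length a = length c -> a ++ x :: b = c ++ y :: d -> a = c /\ x = y /\ b = d.
Proof.
  intros Hl He. destruct (app_split_len _ _ _ _ Hl He) as [-> H]. injection H; auto.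
Qed.

Lemma ins_length {A} (xs us : list A) i :
  1 <= i <= length xs -> length (ins xs i us) = length xs - 1 + length us.
Proof.
  intros Hi. unfold ins. rewrite !length_app, length_firstn, length_skipn. lia.
Qed.

Lemma map_ins {A B} (f : A -> B) xs i us :
  map f (ins xs i us) = ins (map f xs) i (map f us).
Proof. unfold ins. rewrite !map_app, firstn_map, skipn_map. reflexivity. Qed.

Lemma ins_congr {A} (X1 X2 : list A) i M :
  firstn (i-1) X1 = firstn (i-1) X2 -> skipn i X1 = skipn i X2 -> ins X1 i M = ins X2 i M.
Proof. unfold ins. intros -> ->. reflexivity. Qed.

Lemma ins_split {A} (X1 X2 M1 M2 : list A) i :
  length X1 = length X2 -> 1 <= i <= length X1 -> length M1 = length M2 ->
  ins X1 i M1 = ins X2 i M2 ->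
  firstn (i-1) X1 = firstn (i-1) X2 /\ M1 = M2 /\ skipn i X1 = skipn i X2.
Proof.
  unfold ins; intros HX Hi HM He.
  apply app_split_len in He as [H1 H2].
  - apply app_split_len in H2 as [H3 H4]; auto.
  - rewrite !length_firstn. lia.
Qed.

Lemma firstn_ins {A} (X M : list A) i :
  1 <= i <= length X -> firstn (i-1) (ins X i M) = firstn (i-1) X.
Proof.
  intros Hi. unfold ins. rewrite firstn_app, length_firstn.
  replace (i - 1 - Nat.min (i - 1) (length X)) with 0 by lia.
  rewrite firstn_O, app_nil_r, firstn_firstn. f_equal. lia.
Qed.

Lemma skipn_ins_one {A} (X : list A) i a :
  1 <= i <= length X -> skipn i (ins X i [a]) = skipn i X.
Proof.
  intros Hi. unfold ins. rewrite skipn_app, length_firstn.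
  rewrite skipn_all2 by (rewrite length_firstn; lia). simpl.
  replace (i - Nat.min (i - 1) (length X)) with 1 by lia. reflexivity.
Qed.

Lemma ins_ins {A} (X : list A) i a M :
  1 <= i <= length X -> ins (ins X i [a]) i M = ins X i M.
Proof.
  intros Hi. apply ins_congr; [apply firstn_ins|apply skipn_ins_one]; auto.
Qed.

Lemma ins_expand {A} (X M : list A) i : ins X i M = firstn (i-1) X ++ M ++ skipn i X.
Proof. reflexivity. Qed.

Lemma Forall_ins {A} (P : A -> Prop) X i M :
  Forall P X -> Forall P M -> Forall P (ins X i M).
Proof.
  intros H1 H2. unfold ins. apply Forall_app; split; [|apply Forall_app; split]; auto.
  - rewrite <- (firstn_skipn (i-1) X) in H1. apply Forall_app in H1; tauto.
  - rewrite <- (firstn_skipn i X) in H1. apply Forall_app in H1; tauto.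
Qed.

Lemma Forall_ins_inv {A} (P : A -> Prop) X i M :
  Forall P (ins X i M) -> Forall P (firstn (i-1) X) /\ Forall P M /\ Forall P (skipn i X).
Proof.
  unfold ins; intros H. apply Forall_app in H as [H1 H2]. apply Forall_app in H2. tauto.
Qed.

Lemma Forall_ins_parts {A} (P : A -> Prop) X Y i M :
  Forall P (firstn (i-1) Y) -> Forall P (skipn i Y) -> Forall P M ->
  firstn (i-1) X = firstn (i-1) Y -> skipn i X = skipn i Y -> Forall P (ins X i M).
Proof.
  intros H1 H2 H3 E1 E2. unfold ins. rewrite E1, E2.
  apply Forall_app; split; auto. apply Forall_app; split; auto.
Qed.

Lemma clear_at_mid (l1 l2 : list bool) b :
  clear_at (l1 ++ b :: l2) (length l1) = l1 ++ false :: l2.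
Proof. induction l1; simpl; auto. rewrite IHl1. reflexivity. Qed.

Lemma firstn_snoc {A} (l : list A) j d :
  j < length l -> firstn (S j) l = firstn j l ++ [nth j l d].
Proof.
  revert j; induction l as [|x l IH]; intros j Hj; simpl in *; [lia|].
  destruct j; simpl; auto. rewrite IH by lia. reflexivity.
Qed.

Lemma in_ins_mid {A} (X M : list A) i x : In x M -> In x (ins X i M).
Proof. intros H. unfold ins. apply in_or_app; right; apply in_or_app; auto. Qed.

Lemma nth_ins_mid {A} (X : list A) i a d :
  1 <= i <= length X -> nth (i-1) (ins X i [a]) d = a.
Proof.
  intros Hi. unfold ins. rewrite app_nth2; rewrite length_firstn; [|lia].
  replace (i - 1 - Nat.min (i - 1) (length X)) with 0 by lia. reflexivity.
Qed.

Section TermInd.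
Variable S : Type.
Variable P : term S -> Prop.
Hypothesis HV : forall x, P (Var x).
Hypothesis HF' : forall f ts, Forall P ts -> P (Fun f ts).
Fixpoint term_ind' (t : term S) : P t :=
  match t with
  | Var x => HV x
  | Fun f ts => HF' f ts ((fix go (l : list (term S)) : Forall P l :=
      match l with [] => Forall_nil _ | u :: l' => Forall_cons _ (term_ind' u) (go l') end) ts)
  end.
End TermInd.

Lemma subst_ext_vars {S} (s1 s2 : nat -> term S) t :
  (forall x, In x (vars t) -> s1 x = s2 x) -> subst s1 t = subst s2 t.
Proof.
  induction t as [x|f ts IH] using term_ind'; simpl; intros H.
  - apply H; simpl; auto.
  - f_equal. apply map_ext_in. intros u Hu. rewrite Forall_forall in IH.
    apply IH; auto. intros x Hx. apply H. apply in_flat_map. eauto.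
Qed.

Lemma subst_eq_vars {S} (s1 s2 : nat -> term S) t :
  subst s1 t = subst s2 t -> forall x, In x (vars t) -> s1 x = s2 x.
Proof.
  induction t as [x|f ts IH] using term_ind'; simpl; intros H y Hy.
  - destruct Hy as [->|[]]; auto.
  - injection H as H. apply in_flat_map in Hy as [u [Hu Hy]].
    rewrite Forall_forall in IH. apply (IH u Hu); auto.
    apply (proj1 map_ext_in_iff H); auto.
Qed.

Lemma map_subst_eq_vars {S} (s1 s2 : nat -> term S) ts :
  map (subst s1) ts = map (subst s2) ts -> forall x, In x (flat_map vars ts) -> s1 x = s2 x.
Proof.
  intros H x Hx. apply in_flat_map in Hx as [u [Hu Hx]].
  apply (subst_eq_vars s1 s2 u); auto. apply (proj1 map_ext_in_iff H); auto.
Qed.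

Lemma flat_map_map {A B C} (f : B -> list C) (g : A -> B) l :
  flat_map f (map g l) = flat_map (fun x => f (g x)) l.
Proof. induction l; simpl; congruence. Qed.

Lemma flat_map_ext_in' {A B} (f g : A -> list B) l :
  (forall a, In a l -> f a = g a) -> flat_map f l = flat_map g l.
Proof. induction l; simpl; intros H; auto. rewrite H, IHl; auto. Qed.

Lemma vars_fmap {A B} (h : A -> B) t : vars (fmap h t) = vars t.
Proof.
  induction t as [x|f ts IH] using term_ind'; simpl; auto.
  rewrite flat_map_map. apply flat_map_ext_in'. rewrite Forall_forall in IH. auto.
Qed.

Lemma subst_fun {S} (sg : nat -> term S) f ts : subst sg (Fun f ts) = Fun f (map (subst sg) ts).
Proof. reflexivity. Qed.

From Stdlib Require Import Classical ClassicalEpsilon.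

Section GenSeq.
Variable A : Type.
Variable P : A -> Prop.
Variable R : A -> A -> Prop.
Hypothesis Hstep : forall a, P a -> exists b, R a b /\ P b.

Definition next_sig (x : sig P) : sig P :=
  let e := constructive_indefinite_description _ (Hstep (proj1_sig x) (proj2_sig x)) in
  exist P (proj1_sig e) (proj2 (proj2_sig e)).

Fixpoint iter_sig (x0 : sig P) (n : nat) : sig P :=
  match n with 0 => x0 | S n => next_sig (iter_sig x0 n) end.

Lemma gen_seq a0 : P a0 -> exists s : nat -> A, s 0 = a0 /\ forall k, R (s k) (s (S k)).
Proof.
  intros H0. exists (fun k => proj1_sig (iter_sig (exist P a0 H0) k)). split; auto.
  intros k. simpl. unfold next_sig. simpl.
  destruct (constructive_indefinite_description _ _) as [b [Hb1 Hb2]]. simpl. exact Hb1.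
Qed.
End GenSeq.

Lemma notAcc_seq {A} (R : A -> A -> Prop) a : ~ Acc (fun b a => R a b) a ->
  exists s : nat -> A, s 0 = a /\ forall k, R (s k) (s (S k)).
Proof.
  intros Ha. apply (gen_seq A (fun x => ~ Acc (fun b a => R a b) x) R); auto.
  intros x Hx. apply NNPP. intros Hn. apply Hx. constructor. intros y Hy.
  apply NNPP. intros Hy'. apply Hn. eauto.
Qed.

Inductive list_step {A} (R : A -> A -> Prop) : list A -> list A -> Prop :=
| lst_here pre a b post : R a b -> list_step R (pre ++ a :: post) (pre ++ b :: post).

Lemma Acc_cons {A} (R : A -> A -> Prop) a : Acc (fun y x => R x y) a ->
  forall l, Acc (fun y x => list_step R x y) l -> Acc (fun y x => list_step R x y) (a :: l).
Proof.
  induction 1 as [a Ha IHa]. intros l Hl. induction Hl as [l Hl IHl].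
  constructor. intros l2 Hs. inversion Hs as [pre x y post Hxy E1 E2]; subst.
  destruct pre as [|z pre]; simpl in *.
  - injection E1 as -> ->. apply IHa; auto. constructor; auto.
  - injection E1 as -> E. subst l. apply IHl. constructor. auto.
Qed.

Lemma Acc_list {A} (R : A -> A -> Prop) l : Forall (Acc (fun y x => R x y)) l ->
  Acc (fun y x => list_step R x y) l.
Proof.
  induction 1 as [|a l Ha Hl IH].
  - constructor. intros y H. inversion H. destruct pre; discriminate.
  - apply Acc_cons; auto.
Qed.

Section Main.
Variable F : Type.
Variable arity : F -> nat.
Variable Rf : F -> list (crule F).
Hypothesis HS : strong_CCTRS F arity Rf.

Local Notation hterm := (term (Hsym F)).
Local Notation gterm := (term (F * list bool)).
Local Notation fterm := (term F).
Local Notation m := (m F Rf).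
Local Notation xi := (xi F Rf).
Local Notation emb := (emb F).
Local Notation label := (label F Rf).
Local Notation erase := (erase F).
Local Notation lnf := (lnf F Rf).
Local Notation wf := (wf F arity).
Local Notation cterm := (cterm F Rf).
Local Notation is_constructor := (is_constructor F Rf).
Local Notation cstep := (cstep F arity Rf).
Local Notation lstep := (lstep F Rf).
Local Notation lsteps := (lsteps F Rf).
Local Notation lcstep := (lcstep F Rf).
Local Notation Xi_rule := (Xi_rule F arity Rf).
Local Notation AP := (AP F arity Rf).
Local Notation active := (active F arity).
Local Notation is_bt := (is_bt F).
Local Notation bot := (bot F).
Local Notation top := (top F).
Local Notation is_top := (is_top F).
Local Notation cnd_a := (cnd_a F).
Local Notation cnd_b := (cnd_b F).
Local Notation rlhs := (rlhs F).
Local Notation NT := (nonterminating F arity Rf).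

Definition auxlab (f : F) (i j : nat) (ts : list hterm) : list bool :=
  let rest := skipn (arity f) ts in
  map is_top (firstn (i-1) rest) ++ true :: map is_top (skipn (i-1+j) rest).

Fixpoint Z (t : hterm) : gterm :=
  match t with
  | Var x => Var x
  | Fun (HF f) ts => Fun (f, map is_top (skipn (arity f) ts)) (firstn (arity f) (map Z ts))
  | Fun (HAux f i j) ts => Fun (f, auxlab f i j ts) (firstn (arity f) (map Z ts))
  | Fun _ _ => Var 0
  end.

Definition Zs (sg : nat -> hterm) : nat -> gterm := fun x => Z (sg x).

Inductive Inv : hterm -> Prop :=
| I_var x : Inv (Var x)
| I_bot : Inv bot
| I_top : Inv top
| I_hf f (ss cs : list hterm) : length ss = arity f -> Forall Inv ss -> length cs = m f ->
    Forall is_bt cs -> Inv (Fun (HF f) (ss ++ cs))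
| I_aux f i j (rho : crule F) (sg : nat -> hterm) (X : list hterm) (c : hterm) (ts : list hterm) :
    1 <= i <= m f -> nth_error (Rf f) (i-1) = Some rho ->
    1 <= j <= length (rconds rho) -> length X = m f -> Forall is_bt X ->
    ts = map (fun l => subst sg (emb l)) (rargs rho) ++
         ins X i (map (fun cd => subst sg (emb (snd cd))) (firstn (j-1) (rconds rho)) ++ [c]) ->
    Forall Inv ts ->
    (forall j', j' < j - 1 -> lsteps (subst (Zs sg) (label (cnd_a rho j')))
                                     (subst (Zs sg) (label (cnd_b rho j')))) ->
    lsteps (subst (Zs sg) (label (cnd_a rho (j-1)))) (Z c) ->
    Inv (Fun (HAux f i j) ts).

Lemma is_bt_Inv t : is_bt t -> Inv t.
Proof. intros [->| ->]; constructor. Qed.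

Lemma Inv_args g ts : Inv (Fun g ts) -> Forall Inv ts.
Proof.
  intros H; inversion H; subst; auto.
  apply Forall_app; split; auto. eapply Forall_impl; [intros a; apply is_bt_Inv|]; auto.
Qed.

Lemma Inv_subst_var sg t x : Inv (subst sg t) -> In x (vars t) -> Inv (sg x).
Proof.
  induction t as [y|g ts IH] using term_ind'; simpl; intros H Hx.
  - destruct Hx as [->|[]]; auto.
  - apply Inv_args in H. apply in_flat_map in Hx as [u [Hu Hx]].
    rewrite Forall_forall in IH, H. apply (IH u Hu); auto. apply H, in_map; auto.
Qed.

Lemma HC : is_CCTRS F arity Rf.
Proof. apply HS. Qed.

Lemma rule_facts f rho : In rho (Rf f) ->
    length (rargs rho) = arity f /\
    Forall wf (rargs rho) /\ wf (rrhs rho) /\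
    Forall (fun c => wf (fst c) /\ wf (snd c)) (rconds rho) /\
    Forall cterm (rargs rho) /\
    Forall (fun c => cterm (snd c)) (rconds rho) /\
    incl (vars (rrhs rho))
         (vars (rlhs f rho) ++ flat_map (fun c => vars (snd c)) (rconds rho)) /\
    (forall i, i < length (rconds rho) ->
       incl (vars (fst (nth i (rconds rho) (Var 0, Var 0))))
            (vars (rlhs f rho) ++
             flat_map (fun c => vars (snd c)) (firstn i (rconds rho)))).
Proof.
  intros H. destruct (HC f rho H) as (H1&H2&H3&H4&H5&H6&_&H8&H9). tauto.
Qed.

Lemma cterm_fun f ts : cterm (Fun f ts) -> is_constructor f /\ Forall cterm ts.
Proof.
  unfold Defs.cterm; simpl. intros H. inversion H; subst. split; auto.
  apply Forall_forall. intros t Ht. apply Forall_forall. intros x Hx.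
  rewrite Forall_forall in H3. apply H3. apply in_flat_map; eauto.
Qed.

Lemma cons_m f : is_constructor f -> m f = 0.
Proof. unfold Defs.is_constructor, Defs.m. intros ->. reflexivity. Qed.

Lemma emb_xi c t : cterm t -> emb t = xi c t.
Proof.
  induction t as [x|f ts IH] using term_ind'; simpl; intros H; auto.
  apply cterm_fun in H as [H1 H2]. rewrite cons_m, app_nil_r by auto.
  change (emb (Fun f ts)) with (Fun (HF f) (map emb ts)). f_equal. apply map_ext_in. intros u Hu. rewrite Forall_forall in *. auto.
Qed.

Lemma vars_repeat (c : Hsym F) k : @flat_map hterm nat (@vars (Hsym F)) (repeat (Fun c []) k) = [].
Proof. induction k; simpl; auto. Qed.

Lemma vars_xi c t : vars (xi c t) = vars t.
Proof.
  induction t as [x|f ts IH] using term_ind'; simpl; auto.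
  rewrite flat_map_app. rewrite vars_repeat, app_nil_r, flat_map_map.
  apply flat_map_ext_in'. rewrite Forall_forall in IH; auto.
Qed.

Lemma map_subst_repeat (sg : nat -> hterm) c k :
  map (subst sg) (repeat (Fun c []) k) = repeat (Fun c []) k.
Proof. induction k; simpl; congruence. Qed.

Lemma map_subst_repeat_top (sg : nat -> hterm) k :
  map (subst sg) (repeat top k) = repeat top k.
Proof. induction k; simpl; [reflexivity|]. rewrite IHk. reflexivity. Qed.

Lemma wf_fun f ts : wf (Fun f ts) -> length ts = arity f /\ Forall wf ts.
Proof. intros H; inversion H; auto. Qed.

Lemma Inv_xi sg t : wf t -> (forall x, In x (vars t) -> Inv (sg x)) ->
  Inv (subst sg (xi HTop t)).
Proof.
  induction t as [x|f ts IH] using term_ind'; simpl; intros Hw H.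
  - apply H; simpl; auto.
  - apply wf_fun in Hw as [Hl Hw]. rewrite map_app, map_subst_repeat.
    constructor.
    + rewrite !length_map; auto.
    + rewrite Forall_forall in *. intros u Hu. apply in_map_iff in Hu as [v [<- Hv]].
      apply in_map_iff in Hv as [w [<- Hw']]. apply IH; auto.
      intros x Hx. apply H. apply in_flat_map; eauto.
    + apply repeat_length.
    + apply Forall_forall. intros u Hu. apply repeat_spec in Hu. subst. right; reflexivity.
Qed.

Lemma Z_HF_app f ss cs : length ss = arity f ->
  Z (Fun (HF f) (ss ++ cs)) = Fun (f, map is_top cs) (map Z ss).
Proof.
  intros H. simpl. rewrite <- H, skipn_app, skipn_all, Nat.sub_diag. simpl.
  rewrite map_app, firstn_app, length_map, Nat.sub_diag, firstn_O, app_nil_r.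
  rewrite firstn_all2; [reflexivity| rewrite length_map; lia].
Qed.

Lemma ins_top_lab (X : list hterm) i :
  1 <= i <= length X ->
  map is_top (ins X i [top]) = map is_top (firstn (i-1) X) ++ true :: map is_top (skipn i X).
Proof. intros. unfold ins. rewrite !map_app. reflexivity. Qed.

Lemma firstn_app_len {A} (a b : list A) : firstn (length a) (a ++ b) = a.
Proof. induction a; simpl; congruence. Qed.

Lemma skipn_app_len2 {A} (a b c : list A) : skipn (length a + length b) (a ++ b ++ c) = c.
Proof. induction a; simpl; auto. induction b; simpl; auto. Qed.

Lemma Z_aux f i j ss X B c : length ss = arity f -> 1 <= i <= length X ->
  length B = j - 1 -> 1 <= j ->
  Z (Fun (HAux f i j) (ss ++ ins X i (B ++ [c]))) = Fun (f, map is_top (ins X i [top])) (map Z ss).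
Proof.
  intros H Hi HB Hj. simpl. f_equal.
  - unfold auxlab. rewrite <- H, skipn_app, skipn_all, Nat.sub_diag. simpl.
    rewrite ins_top_lab by auto. unfold ins.
    replace (i - 1 + j) with (length (firstn (i-1) X) + length (B ++ [c]))
        by (rewrite length_firstn, length_app; simpl; lia).
    rewrite skipn_app_len2.
    replace (i-1) with (length (firstn (i-1) X)) at 1 by (rewrite length_firstn; lia).
    rewrite firstn_app_len. reflexivity.
  - rewrite map_app, firstn_app, length_map, <- H, Nat.sub_diag, firstn_O, app_nil_r.
    rewrite firstn_all2; [reflexivity| rewrite length_map; lia].
Qed.

Lemma map_is_top_repeat k : map is_top (repeat top k) = repeat true k.
Proof. induction k; simpl; congruence. Qed.

Lemma Zxi sg t : wf t -> Z (subst sg (xi HTop t)) = subst (Zs sg) (label t).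
Proof.
  induction t as [x|f ts IH] using term_ind'; intros Hw; [reflexivity|].
  apply wf_fun in Hw as [Hl Hw].
  change (subst sg (xi HTop (Fun f ts))) with
    (Fun (HF f) (map (subst sg) (map (xi HTop) ts ++ repeat top (m f)))).
  change (label (Fun f ts)) with (Fun (f, repeat true (m f)) (map label ts)).
  rewrite map_app, map_subst_repeat_top, Z_HF_app by (rewrite !length_map; auto).
  rewrite map_is_top_repeat, subst_fun. f_equal. rewrite !map_map. apply map_ext_in.
  intros u Hu. rewrite Forall_forall in *. apply IH; auto.
Qed.

Lemma Zemb sg t : cterm t -> wf t -> Z (subst sg (emb t)) = subst (Zs sg) (label t).
Proof. intros H1 H2. rewrite (emb_xi HTop) by auto. apply Zxi; auto. Qed.


Lemma firstn_seq k N n : firstn k (seq N n) = seq N (Nat.min k n).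
Proof.
  revert k N; induction n; intros k N; simpl.
  - rewrite firstn_nil. rewrite Nat.min_0_r. reflexivity.
  - destruct k; simpl; auto. rewrite IHn. reflexivity.
Qed.

Lemma flat_map_vars_Var {S} (l : list nat) : flat_map vars (map (@Var S) l) = l.
Proof. induction l; simpl; congruence. Qed.

Lemma flat_map_funs_Var {S} (l : list nat) : flat_map funs (map (@Var S) l) = [].
Proof. induction l; simpl; congruence. Qed.

Lemma map_nth_seq {B} (h : nat -> B) xs N :
  map (fun x => h (nth (x - N) xs 0)) (seq N (length xs)) = map h xs.
Proof.
  revert N; induction xs as [|y xs IH]; intros N; simpl; auto.
  rewrite Nat.sub_diag. f_equal. rewrite <- (IH (S N)). apply map_ext_in.
  intros x Hx. apply in_seq in Hx. replace (x - N) with (S (x - S N)) by lia. reflexivity.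
Qed.

Lemma map_is_top_repeat_bot k : map is_top (repeat bot k) = repeat false k.
Proof. induction k; simpl; congruence. Qed.

Lemma map_subst_repeat_bot (sg : nat -> hterm) k :
  map (subst sg) (repeat bot k) = repeat bot k.
Proof. induction k; simpl; [reflexivity|]. rewrite IHk. reflexivity. Qed.

Lemma unif_fun_inv {S} (f g : S) as_ bs :
  unifiable (Fun f as_) (Fun g bs) -> f = g.
Proof. intros [th H]. simpl in H. congruence. Qed.

Lemma unif_nth {S} (f g : S) as_ bs k d :
  unifiable (Fun f as_) (Fun g bs) -> unifiable (nth k as_ d) (nth k bs d).
Proof.
  intros [th H]. simpl in H. injection H as _ H. exists th.
  rewrite <- (map_nth (subst th) as_ d), <- (map_nth (subst th) bs d), H. reflexivity.
Qed.

Lemma fmap_fun_eq {A B} (h : A -> B) f ts : fmap h (Fun f ts) = Fun (h f) (map (fmap h) ts).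
Proof. reflexivity. Qed.

Lemma AP_lnf t v : AP t v -> wf t -> cterm t -> forall sg N,
  exists u tau, lnf u /\ NoDup (vars u) /\ (forall x, In x (vars u) -> N <= x) /\
    subst tau u = Z (subst sg v) /\ ~ unifiable (erase u) t.
Proof.
  induction 1 as [f ts g xs Hg Hxs | f ts i v' xs Hi Hlen HAP IH];
    intros Hw Hc sg N; apply cterm_fun in Hc as [Hcf Hcs]; apply wf_fun in Hw as [Hwl Hws].
  - exists (Fun (g, repeat false (m g)) (map Var (seq N (length xs)))).
    exists (fun x => Z (sg (nth (x - N) xs 0))).
    split; [|split; [|split; [|split]]].
    + unfold Defs.lnf. simpl. rewrite flat_map_funs_Var. constructor; auto.
    + simpl. rewrite flat_map_vars_Var. apply seq_NoDup.
    + simpl. rewrite flat_map_vars_Var. intros x Hx. apply in_seq in Hx. lia.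
    + simpl subst at 1. rewrite subst_fun, map_app, map_subst_repeat_bot, Z_HF_app
        by (rewrite length_map, length_map; auto).
      rewrite map_is_top_repeat_bot, map_map, map_map. simpl.
      f_equal. rewrite map_map. apply (map_nth_seq (fun x => Z (sg x))).
    + intros Hu. apply unif_fun_inv in Hu. simpl in Hu. subst g.
      destruct Hg as [[_ Hne]|Hnc]; auto.
  - destruct (IH ltac:(rewrite Forall_forall in Hws; apply Hws, nth_In; lia)
                 ltac:(rewrite Forall_forall in Hcs; apply Hcs, nth_In; lia) sg (N + length xs))
      as [u' [tau' [Hl' [Hnd' [Hge' [Hs' Hnu']]]]]].
    exists (Fun (f, []) (ins (map Var (seq N (length xs))) i [u'])).
    exists (fun x => if x <? N + length xs then Z (sg (nth (x - N) xs 0)) else tau' x).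
    split; [|split; [|split; [|split]]].
    + unfold Defs.lnf in *. simpl. constructor.
      * simpl. rewrite cons_m by auto. reflexivity.
      * unfold ins. rewrite !flat_map_app, firstn_map, skipn_map, !flat_map_funs_Var. simpl.
        rewrite !app_nil_r. auto.
    + simpl. unfold ins. rewrite !flat_map_app, firstn_map, skipn_map, !flat_map_vars_Var.
      simpl. rewrite app_nil_r, firstn_seq, skipn_seq.
      apply NoDup_app; [apply seq_NoDup| apply NoDup_app; [auto|apply seq_NoDup|]|].
      * intros x Hx Hx'. apply in_seq in Hx'. apply Hge' in Hx. lia.
      * intros x Hx Hx'. apply in_seq in Hx. apply in_app_or in Hx' as [Hx'|Hx'].
        -- apply Hge' in Hx'. lia.
        -- apply in_seq in Hx'. lia.
    + simpl. unfold ins. rewrite !flat_map_app, firstn_map, skipn_map, !flat_map_vars_Var.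
      simpl. rewrite app_nil_r, firstn_seq, skipn_seq.
      intros x Hx. apply in_app_or in Hx as [Hx|Hx]; [apply in_seq in Hx; lia|].
      apply in_app_or in Hx as [Hx|Hx]; [apply Hge' in Hx; lia|apply in_seq in Hx; lia].
    + assert (E: Z (subst sg (Fun (HF f) (ins (map Var xs) i [v']))) =
                 Fun (f, []) (ins (map (fun x => Z (sg x)) xs) i [Z (subst sg v')])).
      { rewrite subst_fun, map_ins.
        rewrite <- (app_nil_r (ins (map (subst sg) (map Var xs)) i (map (subst sg) [v']))).
        rewrite Z_HF_app.
        - simpl. rewrite map_ins, !map_map. reflexivity.
        - rewrite ins_length; rewrite !length_map; simpl; lia. }
      rewrite E, subst_fun, map_ins, map_map. simpl. f_equal. f_equal.
      * rewrite <- (map_nth_seq (fun x => Z (sg x)) xs N). apply map_ext_in. intros x Hx.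
        apply in_seq in Hx. destruct (Nat.ltb_spec x (N + length xs)); [reflexivity|lia].
      * f_equal. rewrite <- Hs'. apply subst_ext_vars. intros x Hx.
        apply Hge' in Hx. destruct (Nat.ltb_spec x (N + length xs)); [lia|reflexivity].
    + intros Hu. apply Hnu'. unfold Defs.erase in Hu. rewrite fmap_fun_eq in Hu. simpl in Hu.
      apply (unif_nth _ _ _ _ (i-1) (Var 0)) in Hu.
      set (L := ins (map Var (seq N (length xs))) i [u']) in Hu.
      assert (E: nth (i-1) (map (fmap fst) L) (Var 0) = fmap fst (nth (i-1) L (Var 0)))
        by (apply (map_nth (fmap fst) L (Var 0))).
      rewrite E in Hu. unfold L in Hu.
      rewrite nth_ins_mid in Hu; [exact Hu|]. rewrite length_map, length_seq. lia.
Qed.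


Definition Lsg (sg : nat -> hterm) (ls : list fterm) : list hterm :=
  map (fun l => subst sg (emb l)) ls.
Definition Bsg (rho : crule F) (sg : nat -> hterm) (n : nat) : list hterm :=
  map (fun cd => subst sg (emb (snd cd))) (firstn n (rconds rho)).

Lemma subst_shape sg g ls xv i mid :
  subst sg (Fun g (map emb ls ++ ins (map Var xv) i mid)) =
  Fun g (Lsg sg ls ++ ins (map sg xv) i (map (subst sg) mid)).
Proof.
  rewrite subst_fun, map_app, map_ins, !map_map. reflexivity.
Qed.

Lemma map_B sg (l : list (fterm * fterm)) :
  map (subst sg) (map (fun c => emb (snd c)) l) = map (fun cd => subst sg (emb (snd cd))) l.
Proof. rewrite map_map. reflexivity. Qed.

Lemma length_Lsg sg ls : length (Lsg sg ls) = length ls.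
Proof. apply length_map. Qed.

Lemma length_Bsg rho sg n : n <= length (rconds rho) -> length (Bsg rho sg n) = n.
Proof. intros. unfold Bsg. rewrite length_map, length_firstn. lia. Qed.

Lemma Z_Lsg sg ls : Forall cterm ls -> Forall wf ls ->
  map Z (Lsg sg ls) = map (fun l => subst (Zs sg) (label l)) ls.
Proof.
  intros H1 H2. unfold Lsg. rewrite map_map. apply map_ext_in. intros l Hl.
  rewrite Forall_forall in *. apply Zemb; auto.
Qed.

Lemma Inv_hf_inv f ts : Inv (Fun (HF f) ts) -> exists ss cs, ts = ss ++ cs /\
  length ss = arity f /\ Forall Inv ss /\ length cs = m f /\ Forall is_bt cs.
Proof. intros H; inversion H; subst. exists ss, cs. auto. Qed.

Lemma Inv_hf_split f ss cs : length ss = arity f -> Inv (Fun (HF f) (ss ++ cs)) ->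
  Forall Inv ss /\ Forall is_bt cs /\ length cs = m f.
Proof.
  intros Hl H. apply Inv_hf_inv in H as [ss' [cs' [E [Hl' [H1 [H2 H3]]]]]].
  apply app_split_len in E as [-> ->]; [|congruence]. auto.
Qed.

Lemma lab_true (X : list hterm) i : 1 <= i <= length X ->
  nth (i-1) (map is_top (ins X i [top])) false = true.
Proof.
  intros Hi. rewrite ins_top_lab by auto. rewrite app_nth2; rewrite length_map, length_firstn; [|lia].
  replace (i - 1 - Nat.min (i - 1) (length X)) with 0 by lia. reflexivity.
Qed.

Lemma lab_clear (X : list hterm) i : 1 <= i <= length X ->
  clear_at (map is_top (ins X i [top])) (i-1) = map is_top (ins X i [bot]).
Proof.
  intros Hi. rewrite ins_top_lab by auto.
  replace (i-1) with (length (map is_top (firstn (i-1) X))) at 2 by (rewrite length_map, length_firstn; lia).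
  rewrite clear_at_mid. unfold ins. rewrite !map_app. reflexivity.
Qed.

Lemma vars_rlhs f rho : vars (rlhs f rho) = flat_map vars (rargs rho).
Proof. reflexivity. Qed.

Lemma Inv_Lsg_var sg ls x : Forall Inv (Lsg sg ls) -> In x (flat_map vars ls) -> Inv (sg x).
Proof.
  intros H Hx. apply in_flat_map in Hx as [l [Hl Hx]]. rewrite Forall_forall in H.
  apply (Inv_subst_var sg (emb l)). apply H. unfold Lsg. apply (in_map (fun l => subst sg (emb l))); auto.
  unfold Defs.emb. rewrite vars_fmap. auto.
Qed.

Lemma Inv_Bsg_var rho sg n x : Forall Inv (Bsg rho sg n) ->
  In x (flat_map (fun c => vars (snd c)) (firstn n (rconds rho))) -> Inv (sg x).
Proof.
  intros H Hx. apply in_flat_map in Hx as [l [Hl Hx]]. rewrite Forall_forall in H.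
  apply (Inv_subst_var sg (emb (snd l))). apply H. unfold Bsg.
  apply (in_map (fun cd => subst sg (emb (snd cd)))); auto.
  unfold Defs.emb. rewrite vars_fmap. auto.
Qed.

Lemma maxl_ge (l : list nat) x : In x l -> x <= fold_right Nat.max 0 l.
Proof. induction l; simpl; [tauto|]. intros [->|H]; [lia|]. apply IHl in H. lia. Qed.

Lemma Lsg_eq_vars sg1 sg2 ls : Lsg sg1 ls = Lsg sg2 ls ->
  forall x, In x (flat_map vars ls) -> sg1 x = sg2 x.
Proof.
  intros H x Hx. apply in_flat_map in Hx as [l [Hl Hx]].
  apply (subst_eq_vars sg1 sg2 (emb l)).
  - apply (proj1 map_ext_in_iff H l Hl).
  - unfold Defs.emb. rewrite vars_fmap. auto.
Qed.

Lemma Bsg_eq_vars rho sg1 sg2 n : Bsg rho sg1 n = Bsg rho sg2 n ->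
  forall x, In x (flat_map (fun c => vars (snd c)) (firstn n (rconds rho))) -> sg1 x = sg2 x.
Proof.
  intros H x Hx. apply in_flat_map in Hx as [l [Hl Hx]].
  apply (subst_eq_vars sg1 sg2 (emb (snd l))).
  - apply (proj1 map_ext_in_iff H l Hl).
  - unfold Defs.emb. rewrite vars_fmap. auto.
Qed.

Lemma transport sg1 sg2 (t : fterm) :
  (forall x, In x (vars t) -> sg1 x = sg2 x) ->
  subst (Zs sg1) (label t) = subst (Zs sg2) (label t).
Proof.
  intros H. apply subst_ext_vars. unfold Defs.label. rewrite vars_fmap.
  intros x Hx. unfold Zs. rewrite H; auto.
Qed.

Lemma in_firstn_le {A} (l : list A) a b x : a <= b -> In x (firstn a l) -> In x (firstn b l).
Proof.
  intros H Hx. rewrite <- (firstn_skipn a (firstn b l)). apply in_or_app. left.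
  rewrite firstn_firstn. replace (Nat.min a b) with a by lia. auto.
Qed.

Lemma nth_in_firstn {A} (l : list A) j n d : j < n -> j < length l -> In (nth j l d) (firstn n l).
Proof.
  intros H1 H2. replace (nth j l d) with (nth j (firstn n l) d).
  - apply nth_In. rewrite length_firstn. lia.
  - rewrite nth_firstn. destruct (Nat.ltb_spec j n); [reflexivity|lia].
Qed.


Lemma in_flat_map_firstn_le {A B} (g : A -> list B) l a b x : a <= b ->
  In x (flat_map g (firstn a l)) -> In x (flat_map g (firstn b l)).
Proof.
  intros H Hx. apply in_flat_map in Hx as [y [Hy Hx]]. apply in_flat_map.
  exists y; split; auto. eapply in_firstn_le; eauto.
Qed.

Lemma rule_of f i rho : nth_error (Rf f) i = Some rho -> In rho (Rf f).
Proof. apply nth_error_In. Qed.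

Lemma agree_a f rho sg1 sg2 j' n :
  In rho (Rf f) -> j' <= n -> j' < length (rconds rho) ->
  (forall x, In x (flat_map vars (rargs rho)) -> sg1 x = sg2 x) ->
  (forall x, In x (flat_map (fun c => vars (snd c)) (firstn n (rconds rho))) -> sg1 x = sg2 x) ->
  subst (Zs sg1) (label (cnd_a rho j')) = subst (Zs sg2) (label (cnd_a rho j')).
Proof.
  intros Hr Hj Hk A1 A2. apply transport. intros x Hx.
  destruct (rule_facts f rho Hr) as (_&_&_&_&_&_&_&H9).
  apply (H9 j' Hk) in Hx. apply in_app_or in Hx as [Hx|Hx].
  - apply A1. exact Hx.
  - apply A2. eapply in_flat_map_firstn_le; eauto.
Qed.

Lemma agree_b rho sg1 sg2 j' n :
  j' < n -> j' < length (rconds rho) ->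
  (forall x, In x (flat_map (fun c => vars (snd c)) (firstn n (rconds rho))) -> sg1 x = sg2 x) ->
  subst (Zs sg1) (label (cnd_b rho j')) = subst (Zs sg2) (label (cnd_b rho j')).
Proof.
  intros Hj Hk A2. apply transport. intros x Hx. apply A2.
  apply in_flat_map. exists (nth j' (rconds rho) (Var 0, Var 0)). split; auto.
  apply nth_in_firstn; auto.
Qed.

Lemma aux_match f i j rho sg xv d :
  1 <= i <= m f -> nth_error (Rf f) (i-1) = Some rho -> 1 <= j <= length (rconds rho) ->
  length xv = m f ->
  Inv (Fun (HAux f i j) (Lsg sg (rargs rho) ++ ins (map sg xv) i (Bsg rho sg (j-1) ++ [d]))) ->
  (exists X', length X' = m f /\ Forall is_bt X' /\ firstn (i-1) X' = firstn (i-1) (map sg xv) /\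
     skipn i X' = skipn i (map sg xv)) /\
  (forall j', j' < j-1 -> lsteps (subst (Zs sg) (label (cnd_a rho j')))
                                 (subst (Zs sg) (label (cnd_b rho j')))) /\
  lsteps (subst (Zs sg) (label (cnd_a rho (j-1)))) (Z d).
Proof.
  intros Hi Hn Hj Hxv H.
  inversion H as [| | | |f0 i0 j0 rho0 sg0 X0 c0 ts0 Hi0 Hn0 Hj0 HX0 Hbt0 Hts0 HInv0 Hc0 Hl0];
    subst.
  rewrite Hn in Hn0. injection Hn0 as <-.
  fold (Lsg sg0 (rargs rho)) (Bsg rho sg0 (j-1)) in Hts0.
  apply app_split_len in Hts0 as [E1 E2]; [| rewrite !length_Lsg; auto].
  apply ins_split in E2 as [F1 [F2 F3]];
    try (rewrite ?length_map; lia);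
    try (rewrite !length_app, !length_Bsg by lia; reflexivity).
  all: [> idtac | rewrite length_map; lia ..].
  apply app_inj_tail in F2 as [G1 <-].
  assert (Hr := rule_of _ _ _ Hn).
  assert (A1 := Lsg_eq_vars _ _ _ E1). assert (A2 := Bsg_eq_vars _ _ _ _ G1).
  split; [|split].
  - exists X0. repeat split; auto.
  - intros j' Hj'. specialize (Hc0 j' Hj').
    rewrite (agree_a f rho sg0 sg j' (j-1)), (agree_b rho sg0 sg j' (j-1)) in Hc0; auto; try lia;
      intros x Hx; symmetry; auto.
  - rewrite (agree_a f rho sg0 sg (j-1) (j-1)) in Hl0; auto; try lia;
      intros x Hx; symmetry; auto.
Qed.


Lemma map_subst_top (sg : nat -> hterm) : map (subst sg) [top] = [top].
Proof. reflexivity. Qed.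
Lemma map_subst_bot (sg : nat -> hterm) : map (subst sg) [bot] = [bot].
Proof. reflexivity. Qed.

Lemma Inv_X_parts (X : list hterm) i M : Forall is_bt (ins X i [top]) -> Forall Inv M ->
  Forall Inv (ins X i M).
Proof.
  intros H1 H2. apply Forall_ins_inv in H1 as [H1 [_ H3]].
  apply (Forall_ins_parts _ X X); auto;
   (eapply Forall_impl; [intros a; apply is_bt_Inv|]; auto).
Qed.

Lemma Z_aux1 f i j ss (X : list hterm) c : length ss = arity f -> 1 <= i <= length X -> j = 1 ->
  Z (Fun (HAux f i j) (ss ++ ins X i [c])) = Fun (f, map is_top (ins X i [top])) (map Z ss).
Proof. intros. apply (Z_aux f i j ss X [] c); simpl; auto; lia. Qed.

Lemma sim_r1 f i rho xv sg :
  1 <= i <= m f -> nth_error (Rf f) (i-1) = Some rho -> length xv = m f ->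
  length (rconds rho) = 0 ->
  Inv (subst sg (Fun (HF f) (map emb (rargs rho) ++ ins (map Var xv) i [top]))) ->
  Inv (subst sg (xi HTop (rrhs rho))) /\
  lstep (Z (subst sg (Fun (HF f) (map emb (rargs rho) ++ ins (map Var xv) i [top]))))
        (Z (subst sg (xi HTop (rrhs rho)))).
Proof.
  intros Hi Hn Hxv Hk H.
  assert (Hr := rule_of _ _ _ Hn).
  destruct (rule_facts f rho Hr) as (Hlen&Hw&Hwr&Hwc&Hc&Hcb&Hvr&Hva).
  rewrite subst_shape, map_subst_top in *.
  apply Inv_hf_split in H as [HL [Hbt Hcl]]; [|rewrite length_Lsg; auto].
  split.
  - apply Inv_xi; auto. intros x Hx. apply Hvr in Hx. rewrite vars_rlhs in Hx.
    destruct (rconds rho) eqn:E; [|simpl in Hk; lia]. simpl in Hx. rewrite app_nil_r in Hx.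
    eapply Inv_Lsg_var; eauto.
  - rewrite Z_HF_app by (rewrite length_Lsg; auto). rewrite Zxi by auto. rewrite Z_Lsg by auto.
    eapply (ls_apply F Rf f _ (i-1) rho (Zs sg)); auto.
    + apply lab_true. rewrite length_map. lia.
    + intros j Hj. lia.
Qed.

Lemma sim_r2 f i rho xv sg :
  1 <= i <= m f -> nth_error (Rf f) (i-1) = Some rho -> length xv = m f ->
  length (rconds rho) > 0 ->
  Inv (subst sg (Fun (HF f) (map emb (rargs rho) ++ ins (map Var xv) i [top]))) ->
  Inv (subst sg (Fun (HAux f i 1) (map emb (rargs rho) ++
         ins (map Var xv) i [xi HTop (fst (nth (1 - 1) (rconds rho) (Var 0, Var 0)))]))) /\
  Z (subst sg (Fun (HF f) (map emb (rargs rho) ++ ins (map Var xv) i [top]))) =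
  Z (subst sg (Fun (HAux f i 1) (map emb (rargs rho) ++
         ins (map Var xv) i [xi HTop (fst (nth (1 - 1) (rconds rho) (Var 0, Var 0)))]))).
Proof.
  intros Hi Hn Hxv Hk H.
  assert (Hr := rule_of _ _ _ Hn).
  destruct (rule_facts f rho Hr) as (Hlen&Hw&Hwr&Hwc&Hc&Hcb&Hvr&Hva).
  rewrite !subst_shape, map_subst_top in *. simpl (map (subst sg) [_]).
  apply Inv_hf_split in H as [HL [Hbt Hcl]]; [|rewrite length_Lsg; auto].
  assert (Ha1 : wf (cnd_a rho 0)).
  { unfold Defs.cnd_a. rewrite Forall_forall in Hwc. apply Hwc. apply nth_In. lia. }
  assert (Hc1 : Inv (subst sg (xi HTop (cnd_a rho 0)))).
  { apply Inv_xi; auto. intros x Hx. apply (Hva 0) in Hx; [|lia].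
    simpl in Hx. rewrite app_nil_r in Hx. eapply Inv_Lsg_var; [eauto|exact Hx]. }
  split.
  - eapply (I_aux f i 1 rho sg (ins (map sg xv) i [top]) (subst sg (xi HTop (cnd_a rho 0)))); auto.
    + replace (1-1) with 0 by lia. rewrite firstn_O. simpl (map _ []). simpl app.
      rewrite ins_ins by (rewrite length_map; lia). reflexivity.
    + apply Forall_app; split; auto. apply Inv_X_parts; auto.
    + intros; lia.
    + replace (1-1) with 0 by lia. rewrite Zxi by auto. constructor.
  - rewrite Z_HF_app by (rewrite length_Lsg; auto).
    rewrite (Z_aux1 f i 1 _ (map sg xv)) by (rewrite ?length_Lsg, ?length_map; lia). reflexivity.
Qed.


Lemma map_subst_Var {S} (sg : nat -> term S) l : map (subst sg) (map Var l) = map sg l.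
Proof. rewrite map_map. reflexivity. Qed.

Lemma ins_seq_facts (u : gterm) N n j :
  NoDup (vars u) -> (forall x, In x (vars u) -> N + n <= x) -> 1 <= j <= n ->
  NoDup (flat_map vars (ins (map Var (seq N n)) j [u])) /\
  (forall x, In x (flat_map vars (ins (map Var (seq N n)) j [u])) -> N <= x).
Proof.
  intros Hnd Hge Hj. unfold ins. rewrite !flat_map_app, firstn_map, skipn_map, !flat_map_vars_Var.
  simpl. rewrite app_nil_r, firstn_seq, skipn_seq. split.
  - apply NoDup_app; [apply seq_NoDup| apply NoDup_app; [auto|apply seq_NoDup|]|].
    + intros x Hx Hx'. apply in_seq in Hx'. apply Hge in Hx. lia.
    + intros x Hx Hx'. apply in_seq in Hx. apply in_app_or in Hx' as [Hx'|Hx'].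
      * apply Hge in Hx'. lia.
      * apply in_seq in Hx'. lia.
  - intros x Hx. apply in_app_or in Hx as [Hx|Hx]; [apply in_seq in Hx; lia|].
    apply in_app_or in Hx as [Hx|Hx]; [apply Hge in Hx; lia|apply in_seq in Hx; lia].
Qed.

Lemma lnf_Var x : lnf (Var x).
Proof. constructor. Qed.

Lemma sim_r6 f i rho xv yv j v sg :
  1 <= i <= m f -> nth_error (Rf f) (i-1) = Some rho -> length xv = m f ->
  length yv = arity f -> 1 <= j <= arity f -> AP (nth (j-1) (rargs rho) (Var 0)) v ->
  Inv (subst sg (Fun (HF f) (ins (map Var yv) j [v] ++ ins (map Var xv) i [top]))) ->
  Inv (subst sg (Fun (HF f) (ins (map Var yv) j [v] ++ ins (map Var xv) i [bot]))) /\
  lstep (Z (subst sg (Fun (HF f) (ins (map Var yv) j [v] ++ ins (map Var xv) i [top]))))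
        (Z (subst sg (Fun (HF f) (ins (map Var yv) j [v] ++ ins (map Var xv) i [bot])))).
Proof.
  intros Hi Hn Hxv Hyv Hj HAP H.
  assert (Hr := rule_of _ _ _ Hn).
  destruct (rule_facts f rho Hr) as (Hlen&Hw&Hwr&Hwc&Hc&Hcb&Hvr&Hva).
  rewrite !subst_fun, !map_app, !map_ins, !map_subst_Var in *.
  simpl (map (subst sg) [_]) in *.
  set (ss := ins (map sg yv) j [subst sg v]) in *.
  assert (Hss : length ss = arity f) by (unfold ss; rewrite ins_length; rewrite ?length_map; simpl; lia).
  apply Inv_hf_split in H as [HL [Hbt Hcl]]; [|auto].
  apply Forall_ins_inv in Hbt as [Hb1 [_ Hb3]].
  split.
  - apply I_hf; auto.
    + rewrite ins_length; rewrite ?length_map; simpl; lia.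
    + apply (Forall_ins_parts _ _ (map sg xv)); auto. constructor; [left; reflexivity|constructor].
  - rewrite !Z_HF_app by auto.
    rewrite <- lab_clear by (rewrite length_map; lia).
    assert (Hwj : wf (nth (j-1) (rargs rho) (Var 0))).
    { rewrite Forall_forall in Hw. apply Hw, nth_In. lia. }
    assert (Hcj : cterm (nth (j-1) (rargs rho) (Var 0))).
    { rewrite Forall_forall in Hc. apply Hc, nth_In. lia. }
    remember (S (fold_right Nat.max 0 (flat_map vars (rargs rho)))) as N0 eqn:HN0.
    destruct (AP_lnf _ _ HAP Hwj Hcj sg (N0 + arity f)) as [u [tau [Hlu [Hndu [Hgeu [Hsu Hnu]]]]]].
    destruct (ins_seq_facts u N0 (arity f) j Hndu Hgeu Hj) as [Hnd Hge].
    eapply (ls_nomatch F Rf f _ (i-1) rho (map Z ss) (ins (map Var (seq N0 (arity f))) j [u])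
              (fun x => if x <? N0 + arity f then Z (sg (nth (x - N0) yv 0)) else tau x)); auto.
    + apply lab_true. rewrite length_map. lia.
    + apply Forall_ins; [|constructor; auto]. apply Forall_forall. intros w Hw'.
      apply in_map_iff in Hw' as [x [<- _]]. apply lnf_Var.
    + intros x Hx Hx'. apply Hge in Hx. change (vars (rlhs f rho)) with (flat_map vars (rargs rho)) in Hx'. apply maxl_ge in Hx'. lia.
    + rewrite map_ins, map_subst_Var. unfold ss. rewrite map_ins, map_map. simpl. f_equal.
      * rewrite <- Hyv, <- (map_nth_seq (fun x => Z (sg x)) yv N0). apply map_ext_in. intros x Hx.
        apply in_seq in Hx. destruct (Nat.ltb_spec x (N0 + length yv)); [reflexivity|lia].
      * f_equal. rewrite <- Hsu. apply subst_ext_vars. intros x Hx.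
        apply Hgeu in Hx. destruct (Nat.ltb_spec x (N0 + arity f)); [lia|reflexivity].
    + intros Hu. apply Hnu. apply (unif_nth _ _ _ _ (j-1) (Var 0)) in Hu.
      set (L := ins (map Var (seq N0 (arity f))) j [u]) in Hu.
      assert (E: nth (j-1) (map erase L) (Var 0) = erase u).
      { rewrite (map_nth erase L (Var 0)). unfold L. rewrite nth_ins_mid; auto.
        rewrite length_map, length_seq. lia. }
      destruct Hu as [th Hth]. exists th. rewrite <- E. exact Hth.
Qed.


Lemma Bsg_snoc rho sg j : j < length (rconds rho) ->
  Bsg rho sg (S j) = Bsg rho sg j ++ [subst sg (emb (cnd_b rho j))].
Proof.
  intros H. unfold Bsg. rewrite (firstn_snoc _ _ (Var 0, Var 0)) by auto.
  rewrite map_app. reflexivity.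
Qed.

Lemma Inv_aux_args f i j ss X M : Inv (Fun (HAux f i j) (ss ++ ins X i M)) ->
  Forall Inv ss /\ Forall Inv (firstn (i-1) X) /\ Forall Inv M /\ Forall Inv (skipn i X).
Proof.
  intros H. apply Inv_args in H. apply Forall_app in H as [H1 H2].
  apply Forall_ins_inv in H2. tauto.
Qed.

Lemma sim_r3 f i rho xv sg :
  1 <= i <= m f -> nth_error (Rf f) (i-1) = Some rho -> length xv = m f ->
  length (rconds rho) > 0 ->
  Inv (subst sg (Fun (HAux f i (length (rconds rho))) (map emb (rargs rho) ++
        ins (map Var xv) i (map (fun c => emb (snd c)) (firstn (length (rconds rho)) (rconds rho)))))) ->
  Inv (subst sg (xi HTop (rrhs rho))) /\
  lstep (Z (subst sg (Fun (HAux f i (length (rconds rho))) (map emb (rargs rho) ++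
        ins (map Var xv) i (map (fun c => emb (snd c)) (firstn (length (rconds rho)) (rconds rho)))))))
        (Z (subst sg (xi HTop (rrhs rho)))).
Proof.
  intros Hi Hn Hxv Hk H.
  assert (Hr := rule_of _ _ _ Hn).
  destruct (rule_facts f rho Hr) as (Hlen&Hw&Hwr&Hwc&Hc&Hcb&Hvr&Hva).
  rewrite subst_shape, map_B in *. fold (Bsg rho sg (length (rconds rho))) in *.
  set (k := length (rconds rho)) in *.
  assert (EB : Bsg rho sg k = Bsg rho sg (k-1) ++ [subst sg (emb (cnd_b rho (k-1)))]).
  { replace k with (S (k-1)) at 1 by lia. apply Bsg_snoc. lia. }
  rewrite EB in *.
  assert (Hbk : cterm (cnd_b rho (k-1)) /\ wf (cnd_b rho (k-1))).
  { unfold Defs.cnd_b. rewrite Forall_forall in Hcb, Hwc.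
    split; [apply Hcb| apply Hwc]; apply nth_In; lia. }
  destruct (aux_match f i k rho sg xv _ Hi Hn ltac:(lia) Hxv H) as [_ [Hconds Hslot]].
  rewrite Zemb in Hslot by tauto.
  destruct (Inv_aux_args _ _ _ _ _ _ H) as [HL [_ [HB _]]].
  split.
  - apply Inv_xi; auto. intros x Hx. apply Hvr in Hx. apply in_app_or in Hx as [Hx|Hx].
    + eapply Inv_Lsg_var; [eauto|exact Hx].
    + apply (Inv_Bsg_var rho sg k).
      * rewrite EB. exact HB.
      * unfold k. rewrite firstn_all. exact Hx.
  - rewrite Z_aux by (rewrite ?length_Lsg, ?length_Bsg, ?length_map; lia).
    rewrite Zxi, Z_Lsg by auto.
    eapply (ls_apply F Rf f _ (i-1) rho (Zs sg)); auto.
    + apply lab_true. rewrite length_map. lia.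
    + intros j Hj. destruct (Nat.ltb_spec j (k-1)).
      * apply Hconds. auto.
      * replace j with (k-1) by lia. exact Hslot.
Qed.


Definition dummy_rule : crule F := mkRule F [] (Var 0) [].

Definition meas (t : hterm) : nat :=
  match t with
  | Fun (HAux f i j) _ => length (rconds (nth (i-1) (Rf f) dummy_rule)) - j
  | _ => 0
  end.

Lemma sim_r4 f i rho xv sg j :
  1 <= i <= m f -> nth_error (Rf f) (i-1) = Some rho -> length xv = m f ->
  1 <= j < length (rconds rho) ->
  Inv (subst sg (Fun (HAux f i j) (map emb (rargs rho) ++
        ins (map Var xv) i (map (fun c => emb (snd c)) (firstn j (rconds rho)))))) ->
  Inv (subst sg (Fun (HAux f i (S j)) (map emb (rargs rho) ++
        ins (map Var xv) i (map (fun c => emb (snd c)) (firstn j (rconds rho)) ++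
          [xi HTop (fst (nth (S j - 1) (rconds rho) (Var 0, Var 0)))])))) /\
  Z (subst sg (Fun (HAux f i j) (map emb (rargs rho) ++
        ins (map Var xv) i (map (fun c => emb (snd c)) (firstn j (rconds rho)))))) =
  Z (subst sg (Fun (HAux f i (S j)) (map emb (rargs rho) ++
        ins (map Var xv) i (map (fun c => emb (snd c)) (firstn j (rconds rho)) ++
          [xi HTop (fst (nth (S j - 1) (rconds rho) (Var 0, Var 0)))])))) /\
  meas (subst sg (Fun (HAux f i (S j)) (map emb (rargs rho) ++
        ins (map Var xv) i (map (fun c => emb (snd c)) (firstn j (rconds rho)) ++
          [xi HTop (fst (nth (S j - 1) (rconds rho) (Var 0, Var 0)))])))) <
  meas (subst sg (Fun (HAux f i j) (map emb (rargs rho) ++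
        ins (map Var xv) i (map (fun c => emb (snd c)) (firstn j (rconds rho)))))).
Proof.
  intros Hi Hn Hxv Hj H.
  assert (Hr := rule_of _ _ _ Hn).
  destruct (rule_facts f rho Hr) as (Hlen&Hw&Hwr&Hwc&Hc&Hcb&Hvr&Hva).
  rewrite !subst_shape, !map_app, !map_B in *. fold (Bsg rho sg j) in *.
  replace (S j - 1) with j by lia. simpl (map (subst sg) [_]).
  fold (cnd_a rho j).
  assert (EB : Bsg rho sg j = Bsg rho sg (j-1) ++ [subst sg (emb (cnd_b rho (j-1)))]).
  { replace j with (S (j-1)) at 1 by lia. apply Bsg_snoc. lia. }
  assert (Hbk : cterm (cnd_b rho (j-1)) /\ wf (cnd_b rho (j-1))).
  { unfold Defs.cnd_b. rewrite Forall_forall in Hcb, Hwc.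
    split; [apply Hcb| apply Hwc]; apply nth_In; lia. }
  assert (Haj : wf (cnd_a rho j)).
  { unfold Defs.cnd_a. rewrite Forall_forall in Hwc. apply Hwc, nth_In. lia. }
  rewrite EB in H.
  destruct (aux_match f i j rho sg xv _ Hi Hn ltac:(lia) Hxv H)
    as [[X' [HX' [Hbt [E1 E2]]]] [Hconds Hslot]].
  rewrite Zemb in Hslot by tauto.
  destruct (Inv_aux_args _ _ _ _ _ _ H) as [HL [HX1 [HB HX2]]].
  rewrite <- EB in HB.
  assert (Hc2 : Inv (subst sg (xi HTop (cnd_a rho j)))).
  { apply Inv_xi; auto. intros x Hx. apply (Hva j) in Hx; [|lia].
    apply in_app_or in Hx as [Hx|Hx].
    + eapply Inv_Lsg_var; [eauto|exact Hx].
    + eapply Inv_Bsg_var; [exact HB|exact Hx]. }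
  split; [|split].
  - apply (I_aux f i (S j) rho sg X' (subst sg (xi HTop (cnd_a rho j)))); auto.
    + lia.
    + replace (S j - 1) with j by lia. f_equal. apply ins_congr; auto.
    + apply Forall_app; split; auto. unfold ins.
      apply Forall_app; split; auto. apply Forall_app; split; auto.
      apply Forall_app; split; auto.
    + intros j' Hj'. destruct (Nat.ltb_spec j' (j-1)).
      * apply Hconds. auto.
      * replace j' with (j-1) by lia. exact Hslot.
    + replace (S j - 1) with j by lia. rewrite Zxi by auto. constructor.
  - rewrite EB. rewrite !Z_aux by (rewrite ?length_Lsg, ?length_app, ?length_Bsg, ?length_map; simpl; lia).
    reflexivity.
  - assert (E: nth (i-1) (Rf f) dummy_rule = rho) by (apply nth_error_nth; auto).
    simpl. rewrite E. lia.
Qed.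


Lemma sim_r5 f i rho xv sg j v :
  1 <= i <= m f -> nth_error (Rf f) (i-1) = Some rho -> length xv = m f ->
  1 <= j <= length (rconds rho) -> AP (snd (nth (j-1) (rconds rho) (Var 0, Var 0))) v ->
  Inv (subst sg (Fun (HAux f i j) (map emb (rargs rho) ++
        ins (map Var xv) i (map (fun c => emb (snd c)) (firstn (j-1) (rconds rho)) ++ [v])))) ->
  Inv (subst sg (Fun (HF f) (map emb (rargs rho) ++ ins (map Var xv) i [bot]))) /\
  lstep (Z (subst sg (Fun (HAux f i j) (map emb (rargs rho) ++
        ins (map Var xv) i (map (fun c => emb (snd c)) (firstn (j-1) (rconds rho)) ++ [v])))))
        (Z (subst sg (Fun (HF f) (map emb (rargs rho) ++ ins (map Var xv) i [bot])))).
Proof.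
  intros Hi Hn Hxv Hj HAP H.
  assert (Hr := rule_of _ _ _ Hn).
  destruct (rule_facts f rho Hr) as (Hlen&Hw&Hwr&Hwc&Hc&Hcb&Hvr&Hva).
  rewrite !subst_shape, !map_app, !map_B, map_subst_bot in *. fold (Bsg rho sg (j-1)) in *.
  simpl (map (subst sg) [_]) in *.
  destruct (aux_match f i j rho sg xv _ Hi Hn Hj Hxv H)
    as [[X' [HX' [Hbt [E1 E2]]]] [Hconds Hslot]].
  destruct (Inv_aux_args _ _ _ _ _ _ H) as [HL _].
  assert (Hbk : cterm (cnd_b rho (j-1)) /\ wf (cnd_b rho (j-1))).
  { unfold Defs.cnd_b. rewrite Forall_forall in Hcb, Hwc.
    split; [apply Hcb| apply Hwc]; apply nth_In; lia. }
  split.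
  - apply I_hf; auto.
    + rewrite length_Lsg; auto.
    + rewrite ins_length; rewrite ?length_map; simpl; lia.
    + apply (Forall_ins_parts _ _ X'); auto.
      * rewrite <- (firstn_skipn (i-1) X') in Hbt. apply Forall_app in Hbt; tauto.
      * rewrite <- (firstn_skipn i X') in Hbt. apply Forall_app in Hbt; tauto.
      * constructor; [left; reflexivity|constructor].
  - rewrite Z_aux by (rewrite ?length_Lsg, ?length_Bsg, ?length_map; simpl; lia).
    rewrite Z_HF_app by (rewrite length_Lsg; auto).
    rewrite <- lab_clear by (rewrite length_map; lia).
    rewrite Z_Lsg by auto.
    remember (S (fold_right Nat.max 0 (vars (cnd_b rho (j-1))))) as N eqn:HN.
    destruct (AP_lnf _ _ HAP (proj2 Hbk) (proj1 Hbk) sg N) as [u [tau [Hlu [Hndu [Hgeu [Hsu Hnu]]]]]].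
    eapply (ls_condfail F Rf f _ (i-1) rho (Zs sg) (j-1) u tau); auto.
    + apply lab_true. rewrite length_map. lia.
    + lia.
    + intros x Hx Hx'. apply Hgeu in Hx. apply maxl_ge in Hx'. lia.
    + rewrite Hsu. exact Hslot.
Qed.


Definition silent_shape (t t' : hterm) : Prop :=
  (exists f ts i ts', t = Fun (HF f) ts /\ t' = Fun (HAux f i 1) ts') \/
  (exists f i j ts ts', t = Fun (HAux f i j) ts /\ t' = Fun (HAux f i (S j)) ts' /\ meas t' < meas t).

Lemma SimRoot l r sg : Xi_rule l r -> Inv (subst sg l) ->
  Inv (subst sg r) /\ (lstep (Z (subst sg l)) (Z (subst sg r)) \/
   (Z (subst sg l) = Z (subst sg r) /\ silent_shape (subst sg l) (subst sg r))).
Proof.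
  intros [Hlin [f [i [rho [xv [Hi [Hn [Hxv Hc]]]]]]]] H. cbv beta zeta in Hc.
  destruct Hc as [[Hk [-> ->]] | [[Hk [-> ->]] | [[Hk [-> ->]] | [[j [Hj [-> ->]]] |
    [[j [v [Hj [HAP [-> ->]]]]] | [yv [j [v [Hyv [Hj [HAP [-> ->]]]]]]]]]]]].
  - destruct (sim_r1 f i rho xv sg Hi Hn Hxv Hk H). auto.
  - destruct (sim_r2 f i rho xv sg Hi Hn Hxv Hk H). split; auto. right. split; auto.
    left. do 4 eexists. split; reflexivity.
  - destruct (sim_r3 f i rho xv sg Hi Hn Hxv Hk H). auto.
  - destruct (sim_r4 f i rho xv sg j Hi Hn Hxv Hj H) as [H1 [H2 H3]]. split; auto. right.
    split; auto. right. do 5 eexists. split; [reflexivity|split; [reflexivity|exact H3]].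
  - destruct (sim_r5 f i rho xv sg j v Hi Hn Hxv Hj HAP H). auto.
  - destruct (sim_r6 f i rho xv yv j v sg Hi Hn Hxv Hyv Hj HAP H). auto.
Qed.

Lemma lsteps_snoc a b c : lsteps a b -> lstep b c -> lsteps a c.
Proof.
  induction 1 as [s|s t u H1 H2 IH]; intros Hc.
  - econstructor; [exact Hc| constructor].
  - econstructor; [exact H1| auto].
Qed.

Lemma split_ctx {A} (pre post ss cs : list A) s :
  length pre < length ss -> pre ++ s :: post = ss ++ cs ->
  exists post1, ss = pre ++ s :: post1 /\ post = post1 ++ cs.
Proof.
  intros Hl E. apply app_eq_app in E as [l' [[E1 E2]|[E1 E2]]].
  - subst. rewrite length_app in Hl. lia.
  - destruct l' as [|y l']; simpl in *.
    + subst. rewrite app_nil_r in Hl. lia.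
    + injection E2 as -> ->. exists l'. auto.
Qed.

Ltac nlia := unfold Defs.hterm, Defs.gterm, Defs.fterm in *; lia.

Lemma Sim t t' : cstep t t' -> Inv t -> Inv t' /\ (lstep (Z t) (Z t') \/ Z t = Z t').
Proof.
  induction 1 as [l r sg Hr | g pre s t0 post Hact Hst IH]; intros H.
  - destruct (SimRoot l r sg Hr H) as [H1 [H2|[H2 _]]]; auto.
  - destruct g as [| |f|f i j]; simpl in Hact; try contradiction.
    + apply Inv_hf_inv in H as [ss [cs [E [Hl [HIs [Hcl Hbt]]]]]].
      destruct (split_ctx pre post ss cs s ltac:(nlia) E) as [post1 [-> ->]].
      rewrite Forall_app in HIs. destruct HIs as [HIp HIs]. inversion HIs; subst.
      destruct (IH H1) as [Ht0 Hz].
      assert (Hl' : length (pre ++ t0 :: post1) = arity f) by (rewrite length_app in *; simpl in *; nlia).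
      replace (pre ++ t0 :: post1 ++ cs) with ((pre ++ t0 :: post1) ++ cs) by (rewrite <- app_assoc; reflexivity).
      replace (pre ++ s :: post1 ++ cs) with ((pre ++ s :: post1) ++ cs) by (rewrite <- app_assoc; reflexivity).
      split.
      * apply I_hf; auto. apply Forall_app; split; auto.
      * rewrite !Z_HF_app by auto. rewrite !map_app. simpl.
        destruct Hz as [Hz|Hz]; [left; apply ls_ctx; auto| right; rewrite Hz; reflexivity].
    + inversion H as [| | | |f0 i0 j0 rho sg X c ts Hi Hn Hj HX Hbt Hts HInv Hc Hl0]; subst.
      assert (Hr := rule_of _ _ _ Hn).
      destruct (rule_facts f rho Hr) as (Hlen&_).
      fold (Lsg sg (rargs rho)) (Bsg rho sg (j-1)) in *.
      rewrite ins_expand in Hts.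
      assert (E: Lsg sg (rargs rho) ++ firstn (i-1) X ++ (Bsg rho sg (j-1) ++ [c]) ++ skipn i X =
                 (Lsg sg (rargs rho) ++ firstn (i-1) X ++ Bsg rho sg (j-1)) ++ c :: skipn i X)
        by (rewrite <- !app_assoc; reflexivity).
      rewrite E in Hts. clear E.
      apply app_cons_split in Hts as [-> [-> ->]];
        [|rewrite !length_app, length_Lsg, length_firstn, length_Bsg; nlia].
      apply Forall_app in HInv as [HIa HIb]. inversion HIb as [|? ? HIc HId]; subst.
      destruct (IH HIc) as [Ht0 Hz].
      assert (E: forall d, (Lsg sg (rargs rho) ++ firstn (i-1) X ++ Bsg rho sg (j-1)) ++ d :: skipn i X =
                 Lsg sg (rargs rho) ++ ins X i (Bsg rho sg (j-1) ++ [d]))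
        by (intros; rewrite ins_expand, <- !app_assoc; reflexivity).
      rewrite !E.
      split.
      * apply (I_aux f i j rho sg X t0); auto.
        -- rewrite <- E. apply Forall_app. split; auto.
        -- destruct Hz as [Hz|Hz]; [eapply lsteps_snoc; eauto| rewrite <- Hz; auto].
      * right. rewrite !Z_aux by (rewrite ?length_Lsg, ?length_Bsg; nlia). reflexivity.
Qed.


Lemma Xi_root l r : Xi_rule l r ->
  (exists f ts, l = Fun (HF f) ts) \/ (exists f i j ts, l = Fun (HAux f i j) ts).
Proof.
  intros [Hlin [f [i [rho [xv [Hi [Hn [Hxv Hc]]]]]]]]. cbv beta zeta in Hc.
  destruct Hc as [[Hk [-> ->]] | [[Hk [-> ->]] | [[Hk [-> ->]] | [[j [Hj [-> ->]]] |
    [[j [v [Hj [HAP [-> ->]]]]] | [yv [j [v [Hyv [Hj [HAP [-> ->]]]]]]]]]]]];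
    [left|left|right|right|right|left]; eauto 6.
Qed.

Lemma no_step_var x t' : ~ cstep (Var x) t'.
Proof.
  intros H. inversion H as [l r sg Hr E|]; subst.
  destruct (Xi_root _ _ Hr) as [[f [ts ->]]|[f [i [j [ts ->]]]]]; discriminate.
Qed.

Lemma no_step_const c ts t' : (c = HBot \/ c = HTop) -> ~ cstep (Fun c ts) t'.
Proof.
  intros Hc H. inversion H as [l r sg Hr E|g pre s t post Hact Hs E1 E2]; subst.
  - destruct (Xi_root _ _ Hr) as [[f [us ->]]|[f [i [j [us ->]]]]]; simpl in E;
      injection E; intros; subst; destruct Hc; discriminate.
  - destruct Hc; subst; simpl in Hact; contradiction.
Qed.

Lemma subterm_trans {S} (a b c : term S) : subterm_eq a b -> subterm_eq b c -> subterm_eq a c.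
Proof. intros H1 H2. induction H2; auto. econstructor; eauto. Qed.

Definition Good (g : gterm) : Prop :=
  exists f lab i rho (sg : nat -> gterm) j c,
    nth_error (Rf f) i = Some rho /\ nth i lab false = true /\ j < length (rconds rho) /\
    (forall j', j' < j -> lsteps (subst sg (label (cnd_a rho j'))) (subst sg (label (cnd_b rho j')))) /\
    subterm_eq (Fun (f, lab) (map (fun l => subst sg (label l)) (rargs rho))) g /\
    Inv c /\ NT c /\ lsteps (subst sg (label (cnd_a rho j))) (Z c).

Lemma Good_sub g h : Good g -> subterm_eq g h -> Good h.
Proof.
  intros [f [lab [i [rho [sg [j [c (H1&H2&H3&H4&H5&H6&H7&H8)]]]]]]] Hs.
  exists f, lab, i, rho, sg, j, c. repeat split; auto. eapply subterm_trans; eauto.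
Qed.

Definition isAux (t : hterm) : Prop := exists f i j ts, t = Fun (HAux f i j) ts.

Definition slot (t : hterm) : hterm :=
  match t with
  | Fun (HAux f i j) ts => nth (arity f + i + j - 2) ts (Var 0)
  | _ => Var 0
  end.


Lemma aux_facts t : Inv t -> isAux t ->
  (NT (slot t) -> Good (Z t)) /\ Inv (slot t).
Proof.
  intros H [f [i [j [ts ->]]]].
  inversion H as [| | | |f0 i0 j0 rho sg X c ts0 Hi Hn Hj HX Hbt Hts HInv Hc Hl0]; subst.
  assert (Hr := rule_of _ _ _ Hn).
  destruct (rule_facts f rho Hr) as (Hlen&Hw&Hwr&Hwc&Hcc&Hcb&Hvr&Hva).
  fold (Lsg sg (rargs rho)) (Bsg rho sg (j-1)) in *.
  assert (Es : slot (Fun (HAux f i j) (Lsg sg (rargs rho) ++ ins X i (Bsg rho sg (j - 1) ++ [c]))) = c).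
  { simpl. rewrite ins_expand.
    replace (Lsg sg (rargs rho) ++ firstn (i-1) X ++ (Bsg rho sg (j-1) ++ [c]) ++ skipn i X) with
      ((Lsg sg (rargs rho) ++ firstn (i-1) X ++ Bsg rho sg (j-1)) ++ c :: skipn i X)
      by (rewrite <- !app_assoc; reflexivity).
    rewrite app_nth2; rewrite !length_app, length_Lsg, length_firstn, length_Bsg; try nlia.
    replace (arity f + i + j - 2 - (length (rargs rho) + (Nat.min (i - 1) (length X) + (j - 1))))
      with 0 by nlia. reflexivity. }
  rewrite Es. split.
  - intros HNT. rewrite Z_aux by (rewrite ?length_Lsg, ?length_Bsg; nlia).
    rewrite Z_Lsg by auto.
    exists f, (map is_top (ins X i [top])), (i-1), rho, (Zs sg), (j-1), c.
    repeat split; auto.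
    + apply lab_true. nlia.
    + nlia.
    + constructor.
    + apply Forall_app in HInv as [_ HInv]. apply Forall_ins_inv in HInv as [_ [HInv _]].
      apply Forall_app in HInv as [_ HInv]. inversion HInv; auto.
  - apply Forall_app in HInv as [_ HInv]. apply Forall_ins_inv in HInv as [_ [HInv _]].
    apply Forall_app in HInv as [_ HInv]. inversion HInv; auto.
Qed.


Definition silent (t t' : hterm) : Prop := cstep t t' /\ ~ lstep (Z t) (Z t').
Definition SSN : hterm -> Prop := Acc (fun b a => silent a b).
Definition SN : hterm -> Prop := Acc (fun b a => cstep a b).

Lemma SN_of_notNT t : ~ NT t -> SN t.
Proof.
  intros H. destruct (classic (SN t)) as [|Hn]; auto. exfalso. apply H.
  unfold NT, Defs.nonterminating. apply notAcc_seq. exact Hn.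
Qed.

Lemma meas_same f i j ts ts' : meas (Fun (HAux f i j) ts) = meas (Fun (HAux f i j) ts').
Proof. reflexivity. Qed.

Lemma slot_ctx f i j pre s post :
  length pre = arity f + i + j - 2 -> slot (Fun (HAux f i j) (pre ++ s :: post)) = s.
Proof.
  intros H. simpl. rewrite app_nth2 by nlia. replace (arity f + i + j - 2 - length pre) with 0 by nlia.
  reflexivity.
Qed.

Lemma Aux_SSN : forall n c, SN c -> forall t, meas t = n -> slot t = c -> Inv t -> ~ Good (Z t) ->
  isAux t -> SSN t.
Proof.
  intros n. induction n as [n IHn] using lt_wf_ind.
  intros c Hc. induction Hc as [c _ IHc].
  intros t Hm Hs HI HG Ha. constructor. intros t' [Hst Hnl].
  destruct (Sim _ _ Hst HI) as [HI' [Hz|Hz]]; [contradiction|].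
  assert (HG' : ~ Good (Z t')) by (rewrite <- Hz; auto).
  inversion Hst as [l r sg Hr E1 E2|g pre s s' post Hact Hs' E1 E2]; subst.
  - destruct (SimRoot l r sg Hr HI) as [_ [Hl|[_ [[f [ts [i [ts' [E _]]]]]|[f [i [j [ts [ts' [E [E' Hlt]]]]]]]]]]];
      [contradiction| |].
    + destruct Ha as [f' [i' [j' [ts'' Ha]]]]. rewrite E in Ha. discriminate.
    + assert (Ha' : isAux (subst sg r)) by (do 4 eexists; exact E').
      destruct (aux_facts _ HI' Ha') as [HNT _].
      apply (IHn (meas (subst sg r)) Hlt (slot (subst sg r))); auto.
      apply SN_of_notNT. intros HN. apply HG'. auto.
  - destruct Ha as [f [i [j [ts Ha]]]]. injection Ha as -> Ets. simpl in Hact.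
    apply (IHc s'); auto.
    + rewrite slot_ctx in * by auto. auto.
    + rewrite slot_ctx by auto. reflexivity.
    + do 4 eexists; reflexivity.
Qed.


Lemma HF_SSN f ss : Acc (fun y x => list_step silent x y) ss -> forall cs, length ss = arity f ->
  Inv (Fun (HF f) (ss ++ cs)) -> ~ Good (Z (Fun (HF f) (ss ++ cs))) -> SSN (Fun (HF f) (ss ++ cs)).
Proof.
  induction 1 as [ss _ IH]. intros cs Hl HI HG. constructor. intros t' [Hst Hnl].
  destruct (Sim _ _ Hst HI) as [HI' [Hz|Hz]]; [contradiction|].
  assert (HG' : ~ Good (Z t')) by (rewrite <- Hz; auto).
  inversion Hst as [l r sg Hr E1 E2|g pre s s' post Hact Hs' E1 E2]; subst.
  - assert (HI0 : Inv (subst sg l)) by (rewrite E1; auto).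
    destruct (SimRoot l r sg Hr HI0) as [_ [Hl'|[_ [[f' [ts [i [ts' [E E']]]]]|[f' [i [j [ts [ts' [E [E' Hlt]]]]]]]]]]];
      [rewrite E1 in Hl'; contradiction| |].
    + assert (Ha' : isAux (subst sg r)) by (do 4 eexists; exact E').
      destruct (aux_facts _ HI' Ha') as [HNT _].
      apply (Aux_SSN (meas (subst sg r)) (slot (subst sg r))); auto.
      apply SN_of_notNT. intros HN. apply HG'. auto.
    + rewrite E in E1. discriminate.
  - match goal with H: pre ++ s :: post = ss ++ cs |- _ => rename H into E end. simpl in Hact.
    destruct (split_ctx pre post ss cs s ltac:(nlia) E) as [post1 [-> ->]].
    replace (pre ++ s' :: post1 ++ cs) with ((pre ++ s' :: post1) ++ cs) in *
      by (rewrite <- app_assoc; reflexivity).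
    replace (pre ++ s :: post1 ++ cs) with ((pre ++ s :: post1) ++ cs) in *
      by (rewrite <- app_assoc; reflexivity).
    apply IH; auto.
    + constructor. split; auto. intros Hl'. apply Hnl.
      rewrite !Z_HF_app by (rewrite length_app in *; simpl in *; nlia).
      rewrite !map_app. simpl. apply ls_ctx. auto.
    + rewrite length_app in *; simpl in *; nlia.
Qed.

Lemma NG_SSN t : Inv t -> ~ Good (Z t) -> SSN t.
Proof.
  induction t as [x|g ts IH] using term_ind'; intros HI HG.
  - constructor. intros t' [H _]. exfalso. apply (no_step_var _ _ H).
  - destruct g as [| |f|f i j].
    + constructor. intros t' [H _]. exfalso. apply (no_step_const HBot ts t'); auto.
    + constructor. intros t' [H _]. exfalso. apply (no_step_const HTop ts t'); auto.
    + apply Inv_hf_inv in HI as HI'. destruct HI' as [ss [cs [-> [Hl [HIs [Hcl Hbt]]]]]].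
      apply HF_SSN; auto. apply Acc_list. rewrite Forall_forall in IH, HIs |- *.
      intros s Hs. apply IH; auto.
      * apply in_or_app; auto.
      * intros HGs. apply HG. apply (Good_sub _ _ HGs).
        rewrite Z_HF_app by auto. econstructor; [apply in_map; exact Hs| constructor].
    + assert (Ha : isAux (Fun (HAux f i j) ts)) by (do 4 eexists; reflexivity).
      destruct (aux_facts _ HI Ha) as [HNT _].
      apply (Aux_SSN (meas (Fun (HAux f i j) ts)) (slot (Fun (HAux f i j) ts))); auto.
      apply SN_of_notNT. intros HN. apply HG. auto.
Qed.


Definition gstep (g g' : gterm) : Prop := lstep g g' \/ lcstep g g'.

Inductive star : gterm -> gterm -> Prop :=
| star_refl a : star a a
| star_step a b c : gstep a b -> star b c -> star a c.

Lemma lsteps_star a b : lsteps a b -> star a b.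
Proof.
  induction 1 as [s|s t u H1 H2 IH]; [constructor|]. econstructor; [left; exact H1| exact IH].
Qed.

Lemma Key_silent t : SSN t -> Inv t -> forall sq : nat -> hterm, sq 0 = t ->
  (forall k, cstep (sq k) (sq (S k))) ->
  exists t', Inv t' /\ NT t' /\ exists g1, gstep (Z t) g1 /\ star g1 (Z t').
Proof.
  induction 1 as [t _ IH]. intros HI sq E Hsq.
  assert (Hst : cstep t (sq 1)) by (rewrite <- E; apply Hsq).
  destruct (Sim _ _ Hst HI) as [HI1 Hz].
  destruct (classic (lstep (Z t) (Z (sq 1)))) as [Hl|Hnl].
  - exists (sq 1). split; auto. split.
    + exists (fun k => sq (S k)). split; auto.
    + exists (Z (sq 1)). split; [left; auto| constructor].
  - destruct Hz as [Hz|Hz]; [contradiction|].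
    destruct (IH (sq 1) (conj Hst Hnl) HI1 (fun k => sq (S k)) eq_refl (fun k => Hsq (S k)))
      as [t' [H1 [H2 H3]]].
    exists t'. rewrite Hz. auto.
Qed.

Lemma Key t : Inv t -> NT t ->
  exists t', Inv t' /\ NT t' /\ exists g1, gstep (Z t) g1 /\ star g1 (Z t').
Proof.
  intros HI HN. destruct (classic (Good (Z t))) as [HG|HG].
  - destruct HG as [f [lab [i [rho [sg [j [c (H1&H2&H3&H4&H5&H6&H7&H8)]]]]]]].
    exists c. split; auto. split; auto. exists (subst sg (label (cnd_a rho j))). split.
    + right. exists f, lab, i, rho, sg, j. repeat split; auto.
    + apply lsteps_star. auto.
  - destruct HN as [sq [E Hsq]]. apply (Key_silent t (NG_SSN t HI HG) HI sq E Hsq).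
Qed.

Lemma zeta_HF_app f (ss cs : list hterm) : length ss = arity f ->
  zeta F arity (Fun (HF f) (ss ++ cs)) = Fun (f, map is_top cs) (map (zeta F arity) ss).
Proof.
  intros H. simpl. rewrite <- H, skipn_app, skipn_all, Nat.sub_diag. simpl.
  rewrite map_app, firstn_app, length_map, Nat.sub_diag, firstn_O, app_nil_r.
  rewrite firstn_all2; [reflexivity| rewrite length_map; lia].
Qed.

Lemma proper_Inv t : proper F arity Rf t -> Inv t /\ Z t = zeta F arity t.
Proof.
  induction t as [x|g ts IH] using term_ind'; intros Hp.
  - split; [constructor|reflexivity].
  - inversion Hp as [|f ss cs Hl Hps Hcl Hbt E1]; subst.
    assert (Hss : Forall (fun s => Inv s /\ Z s = zeta F arity s) ss).
    { rewrite Forall_forall in IH, Hps |- *. intros s Hs. apply IH; auto. apply in_or_app; auto. }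
    split.
    + constructor; auto. eapply Forall_impl; [|exact Hss]. intros a; tauto.
    + rewrite Z_HF_app, zeta_HF_app by auto. f_equal. apply map_ext_in.
      rewrite Forall_forall in Hss. intros a Ha. apply Hss; auto.
Qed.

Theorem main_thm s : proper F arity Rf s -> NT s -> linf F Rf (zeta F arity s).
Proof.
  intros Hp HN. destruct (proper_Inv s Hp) as [HI Hz].
  set (P := fun g => exists t, Inv t /\ NT t /\ star g (Z t)).
  assert (Hstep : forall g, P g -> exists g', gstep g g' /\ P g').
  { intros g [t [HIt [HNt Hs]]]. inversion Hs as [a|a b c Hab Hbc]; subst.
    - destruct (Key t HIt HNt) as [t' [H1 [H2 [g1 [H3 H4]]]]].
      exists g1. split; auto. exists t'. auto.
    - exists b. split; auto. exists t. auto. }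
  destruct (gen_seq gterm P gstep Hstep (zeta F arity s)) as [sq [E Hsq]].
  - exists s. split; auto. split; auto. rewrite Hz. constructor.
  - exists sq. split; auto.
Qed.

End Main.

Theorem lemmaA (F : Type) (arity : F -> nat) (Rf : F -> list (crule F))
  (s : hterm F) :
  strong_CCTRS F arity Rf ->
  proper F arity Rf s -> ground s ->
  nonterminating F arity Rf s ->
  linf F Rf (zeta F arity s).
Proof.
  intros HS Hp _ HN. exact (main_thm F arity Rf HS s Hp HN).
Qed.
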